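(* Assume $\tau_h\le(1+1/(3\boldsymbol\kappa^2))^{1/4}$ and $\theta_h\le1/(4\boldsymbol\kappa)$. Then for every $u:\Omega_h\to\mathbb R$, $$\mathcal F'_h(u)\le17\,\mathcal F_h(u).$$
   Context: Let $\mathbf D:\mathbb R^2\to S_2^+$ be continuous and $\mathbb Z^2$-periodic. Set $\mathbf M(z):=\det(\mathbf D(z))^{1/2}\mathbf D(z)^{-1}$, $\|e\|_M:=\sqrt{\langle e,Me\rangle}$, $\kappa(M):=\sqrt{\|M\|\|M^{-1}\|}$, and $\boldsymbol\kappa:=\max_z\kappa(\mathbf D(z))$. Let $h=1/n$ and $\Omega_h:=[0,1)^2\cap h\mathbb Z^2$. Functions on $\Omega_h$ are extended $\mathbb Z^2$-periodically to $h\mathbb Z^2$. Constants: $\tau(p,q)$ is the least $\tau\ge1$ with $\tau^{-2}\mathbf M(p)\le\mathbf M(q)\le\tau^2\mathbf M(p)$. For any $h>0$, $\tau_h:=\max\{\tau(p,q):\|p-q\|\le2\boldsymbol\kappa h\}$, $\theta_h:=\boldsymbol\kappa(3+9\tau_{2h}^2)(\tau_{2h}^2-1)$, and $\theta_0:=1/(4\boldsymbol\kappa)$. Reduced bases: an $M$-reduced basis is a basis $(e_1,e_2)$ of $\mathbb Z^2$ with $\|e_1\|_M$ minimal over $\mathbb Z^2\setminus\{0\}$ and $\|e_2\|_M$ minimal over $\mathbb Z^2\setminus e_1\mathbb Z$; $\mu(M):=|\langle e_1,Me_2\rangle|$. $V(p):=\{\pm e_0,\pm e_1,\pm e_2\}$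 for an $\mathbf M(p)$-obtuse superbase $(e_0,e_1,e_2)$ of $\mathbb Z^2$ (sum zero, $(e_1,e_2)$ basis, pairwise $\mathbf M(p)$-scalar products $\le0$). Stencils: if $\mu(\mathbf M(p))\le\theta_0$, set $W(p):=\{\pm e,\pm f\}$ and $W'(p):=\{\pm e,\pm f,\pm(e+f),\pm(e-f)\}$ for an $\mathbf M(p)$-reduced basis $(e,f)$ (independent of the choice). Otherwise set $W(p):=W'(p):=V(p)$. Energies: $$\mathcal F_h(u):=\sum_{z\in\Omega_h}\sum_{g\in W(z)}|u(z+hg)-u(z)|^2,\qquad \mathcal F'_h(u):=\sum_{z\in\Omega_h}\sum_{g\in W'(z)}|u(z+hg)-u(z)|^2 .$$ *)

(* Defs.v *)
From Stdlib Require Import Reals Lra ZArith List ClassicalEpsilon.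
Import ListNotations.
Open Scope R_scope.

(** Symmetric 2x2 real matrices [[a, b], [b, c]]. *)
Record sym2 := Sym2 { ma : R; mb : R; mc : R }.

Definition bilR (m : sym2) (x1 x2 y1 y2 : R) : R :=
  ma m * x1 * y1 + mb m * (x1 * y2 + x2 * y1) + mc m * x2 * y2.
Definition quadR (m : sym2) (x1 x2 : R) : R := bilR m x1 x2 x1 x2.

(** Positive definite (membership in S_2^+, symmetry being built in). *)
Definition spd (m : sym2) : Prop :=
  forall x1 x2 : R, (x1 <> 0 \/ x2 <> 0) -> 0 < quadR m x1 x2.

Definition det2 (m : sym2) : R := ma m * mc m - mb m * mb m.
Definition scale2 (s : R) (m : sym2) : sym2 := Sym2 (s * ma m) (s * mb m) (s * mc m).
Definition inv2 (m : sym2) : sym2 :=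
  Sym2 (mc m / det2 m) (- mb m / det2 m) (ma m / det2 m).

Definition loewner_le (A B : sym2) : Prop :=
  forall x1 x2 : R, quadR A x1 x2 <= quadR B x1 x2.

(** Generic choice of "the" element satisfying P (unique in all uses below). *)
Definition the_R (P : R -> Prop) : R := epsilon (inhabits 0) P.
Definition sup_R (S : R -> Prop) : R := the_R (is_lub S).
Definition min_R (S : R -> Prop) : R := the_R (fun t => S t /\ forall s, S s -> t <= s).

Definition opnorm (m : sym2) : R :=
  sup_R (fun r => exists x1 x2 : R, x1 * x1 + x2 * x2 = 1 /\
           r = sqrt ((ma m * x1 + mb m * x2) ^ 2 + (mb m * x1 + mc m * x2) ^ 2)).

Definition kappa (m : sym2) : R := sqrt (opnorm m * opnorm (inv2 m)).

Definition field := R -> R -> sym2.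

Definition continuous2 (f : R -> R -> R) : Prop :=
  forall x y eps, 0 < eps -> exists delta, 0 < delta /\
    forall x' y', (x' - x) ^ 2 + (y' - y) ^ 2 < delta ^ 2 ->
      Rabs (f x' y' - f x y) < eps.

Definition field_continuous (D : field) : Prop :=
  continuous2 (fun x y => ma (D x y)) /\ continuous2 (fun x y => mb (D x y)) /\
  continuous2 (fun x y => mc (D x y)).

Definition field_periodic (D : field) : Prop :=
  forall x y, D (x + 1) y = D x y /\ D x (y + 1) = D x y.

Definition Mof (D : field) (x y : R) : sym2 :=
  scale2 (sqrt (det2 (D x y))) (inv2 (D x y)).

(** bold kappa = max_z kappa(D(z)) (a max, hence the sup). *)
Definition kappaB (D : field) : R :=
  sup_R (fun r => exists x y, r = kappa (D x y)).

Definition tau_set (D : field) (p1 p2 q1 q2 : R) (t : R) : Prop :=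
  1 <= t /\ loewner_le (scale2 (/ (t ^ 2)) (Mof D p1 p2)) (Mof D q1 q2) /\
  loewner_le (Mof D q1 q2) (scale2 (t ^ 2) (Mof D p1 p2)).
Definition tau (D : field) (p1 p2 q1 q2 : R) : R := min_R (tau_set D p1 p2 q1 q2).

Definition tau_h (D : field) (h : R) : R :=
  sup_R (fun r => exists p1 p2 q1 q2,
    sqrt ((p1 - q1) ^ 2 + (p2 - q2) ^ 2) <= 2 * kappaB D * h /\ r = tau D p1 p2 q1 q2).

Definition theta_h (D : field) (h : R) : R :=
  kappaB D * (3 + 9 * tau_h D (2 * h) ^ 2) * (tau_h D (2 * h) ^ 2 - 1).
Definition theta0 (D : field) : R := / (4 * kappaB D).

Definition zv := (Z * Z)%type.
Definition zadd (e f : zv) : zv := ((fst e + fst f)%Z, (snd e + snd f)%Z).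
Definition zopp (e : zv) : zv := ((- fst e)%Z, (- snd e)%Z).
Definition zsub (e f : zv) : zv := zadd e (zopp f).
Definition zmul (k : Z) (e : zv) : zv := ((k * fst e)%Z, (k * snd e)%Z).

Definition bilZ (m : sym2) (e f : zv) : R :=
  bilR m (IZR (fst e)) (IZR (snd e)) (IZR (fst f)) (IZR (snd f)).
Definition normM (m : sym2) (e : zv) : R := sqrt (bilZ m e e).

Definition is_basis (e1 e2 : zv) : Prop :=
  (fst e1 * snd e2 - snd e1 * fst e2 = 1 \/ fst e1 * snd e2 - snd e1 * fst e2 = -1)%Z.

Definition reduced_basis (m : sym2) (b : zv * zv) : Prop :=
  let (e1, e2) := b in
  is_basis e1 e2 /\
  (forall v : zv, v <> (0%Z, 0%Z) -> normM m e1 <= normM m v) /\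
  (forall v : zv, (forall k : Z, v <> zmul k e1) -> normM m e2 <= normM m v).

Definition mu_of (m : sym2) (b : zv * zv) : R := Rabs (bilZ m (fst b) (snd b)).

Definition obtuse_superbase (m : sym2) (s : zv * zv * zv) : Prop :=
  let '(e0, e1, e2) := s in
  zadd e0 (zadd e1 e2) = (0%Z, 0%Z) /\ is_basis e1 e2 /\
  bilZ m e0 e1 <= 0 /\ bilZ m e1 e2 <= 0 /\ bilZ m e0 e2 <= 0.

Definition V_of (s : zv * zv * zv) : list zv :=
  let '(e0, e1, e2) := s in
  [e0; zopp e0; e1; zopp e1; e2; zopp e2].

(** Stencils W(p), W'(p), given the chosen reduced basis b and obtuse superbase s
    at p (M = M(p)). *)
Definition W_of (D : field) (m : sym2) (b : zv * zv) (s : zv * zv * zv) : list zv :=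
  if Rle_dec (mu_of m b) (theta0 D)
  then let (e, f) := b in [e; zopp e; f; zopp f]
  else V_of s.
Definition W'_of (D : field) (m : sym2) (b : zv * zv) (s : zv * zv * zv) : list zv :=
  if Rle_dec (mu_of m b) (theta0 D)
  then let (e, f) := b in
       [e; zopp e; f; zopp f; zadd e f; zopp (zadd e f); zsub e f; zopp (zsub e f)]
  else V_of s.

Definition sumR (n : nat) (f : nat -> R) : R := fold_right Rplus 0 (map f (seq 0 n)).
Definition sumL (l : list zv) (f : zv -> R) : R := fold_right Rplus 0 (map f l).

(** Grid functions u : Omega_h -> R, with Omega_h indexed by (i, j) in [0,n)^2,
    i.e. z = (i h, j h), h = 1/n; extended Z^2-periodically (indices mod n). *)
Definition uper (n : nat) (u : Z -> Z -> R) (i j : Z) : R :=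
  u (Z.modulo i (Z.of_nat n)) (Z.modulo j (Z.of_nat n)).

Definition energy (n : nat) (St : R -> R -> list zv) (u : Z -> Z -> R) : R :=
  let h := / INR n in
  sumR n (fun i => sumR n (fun j =>
    let zi := Z.of_nat i in let zj := Z.of_nat j in
    sumL (St (INR i * h) (INR j * h)) (fun g =>
      (uper n u (zi + fst g) (zj + snd g) - uper n u zi zj) ^ 2))).

Definition F_h (D : field) (rb : R -> R -> zv * zv) (sb : R -> R -> zv * zv * zv)
  (n : nat) (u : Z -> Z -> R) : R :=
  energy n (fun x y => W_of D (Mof D x y) (rb x y) (sb x y)) u.
Definition F'_h (D : field) (rb : R -> R -> zv * zv) (sb : R -> R -> zv * zv * zv)
  (n : nat) (u : Z -> Z -> R) : R :=
  energy n (fun x y => W'_of D (Mof D x y) (rb x y) (sb x y)) u.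

(* Main.v *)
Require Import Defs.
From Stdlib Require Import Reals ZArith List.
From Stdlib Require Import Lra Lia Psatz ClassicalEpsilon.
Import ListNotations.
Open Scope R_scope.

Lemma the_R_spec (P : R -> Prop) : (exists x, P x) -> P (the_R P).
Proof. intro H. unfold the_R. apply epsilon_spec. exact H. Qed.

Lemma sup_R_lub (S : R -> Prop) : bound S -> (exists x, S x) -> is_lub S (sup_R S).
Proof.
  intros Hb He. unfold sup_R. apply the_R_spec.
  destruct (completeness S Hb He) as [m Hm]. exists m; exact Hm.
Qed.

Lemma sup_R_ub (S : R -> Prop) r : bound S -> S r -> r <= sup_R S.
Proof.
  intros Hb Hr. destruct (sup_R_lub S Hb (ex_intro _ r Hr)) as [H1 _]. apply H1; exact Hr.
Qed.

Lemma sup_R_le (S : R -> Prop) K : (exists x, S x) -> (forall r, S r -> r <= K) -> sup_R S <= K.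
Proof.
  intros He Hk. assert (Hb : bound S) by (exists K; intros r Hr; apply Hk; exact Hr).
  destruct (sup_R_lub S Hb He) as [_ H2]. apply H2. intros r Hr; apply Hk; exact Hr.
Qed.

Definition opset (m : sym2) := (fun r => exists x1 x2 : R, x1 * x1 + x2 * x2 = 1 /\
           r = sqrt ((ma m * x1 + mb m * x2) ^ 2 + (mb m * x1 + mc m * x2) ^ 2)).

Lemma sqrt_sum_le X Y : sqrt (X ^ 2 + Y ^ 2) <= Rabs X + Rabs Y.
Proof.
  rewrite <- (sqrt_Rsqr (Rabs X + Rabs Y)) by (pose proof (Rabs_pos X); pose proof (Rabs_pos Y); lra).
  apply sqrt_le_1_alt. unfold Rsqr.
  pose proof (Rabs_pos X); pose proof (Rabs_pos Y).
  replace (X ^ 2) with (Rabs X * Rabs X) by (rewrite <- Rabs_mult; simpl; rewrite Rmult_1_r; apply Rabs_right; nra).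
  replace (Y ^ 2) with (Rabs Y * Rabs Y) by (rewrite <- Rabs_mult; simpl; rewrite Rmult_1_r; apply Rabs_right; nra).
  nra.
Qed.

Definition Sabs (m : sym2) := Rabs (ma m) + 2 * Rabs (mb m) + Rabs (mc m).

Lemma unit_bound x1 x2 : x1 * x1 + x2 * x2 = 1 -> Rabs x1 <= 1 /\ Rabs x2 <= 1.
Proof.
  intros H. split; apply Rabs_le; nra.
Qed.

Lemma lin_abs_bound a b x1 x2 : Rabs x1 <= 1 -> Rabs x2 <= 1 -> Rabs (a * x1 + b * x2) <= Rabs a + Rabs b.
Proof.
  intros H1 H2. eapply Rle_trans; [apply Rabs_triang|]. rewrite !Rabs_mult.
  pose proof (Rabs_pos a); pose proof (Rabs_pos b). nra.
Qed.

Lemma opset_bound m r : opset m r -> r <= Sabs m.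
Proof.
  intros [x1 [x2 [Hu ->]]]. destruct (unit_bound _ _ Hu) as [H1 H2].
  eapply Rle_trans; [apply sqrt_sum_le|]. unfold Sabs.
  pose proof (lin_abs_bound (ma m) (mb m) _ _ H1 H2).
  pose proof (lin_abs_bound (mb m) (mc m) _ _ H1 H2). lra.
Qed.

Lemma opset_ne m : exists r, opset m r.
Proof. eexists; exists 1, 0; split; [ring|reflexivity]. Qed.

Lemma opnorm_ge m x1 x2 : x1 * x1 + x2 * x2 = 1 ->
  sqrt ((ma m * x1 + mb m * x2) ^ 2 + (mb m * x1 + mc m * x2) ^ 2) <= opnorm m.
Proof.
  intros Hu. apply sup_R_ub.
  - exists (Sabs m). intros r Hr. apply opset_bound; exact Hr.
  - exists x1, x2; split; auto.
Qed.

Lemma opnorm_le m K : (forall x1 x2, x1 * x1 + x2 * x2 = 1 ->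
  sqrt ((ma m * x1 + mb m * x2) ^ 2 + (mb m * x1 + mc m * x2) ^ 2) <= K) -> opnorm m <= K.
Proof.
  intros H. apply sup_R_le. apply opset_ne. intros r [x1 [x2 [Hu ->]]]. apply H; auto.
Qed.

Lemma opnorm_le_S m : opnorm m <= Sabs m.
Proof. apply opnorm_le. intros x1 x2 Hu. apply opset_bound. exists x1, x2; auto. Qed.

Lemma opnorm_nonneg m : 0 <= opnorm m.
Proof.
  eapply Rle_trans; [|apply (opnorm_ge m 1 0); ring]. apply sqrt_pos.
Qed.

Lemma cs_sqrt u1 u2 X Y : u1 * u1 + u2 * u2 = 1 -> u1 * X + u2 * Y <= sqrt (X ^ 2 + Y ^ 2).
Proof.
  intros Hu. destruct (Rle_dec (u1 * X + u2 * Y) 0) as [H|H].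
  - pose proof (sqrt_pos (X ^ 2 + Y ^ 2)); lra.
  - rewrite <- (sqrt_Rsqr (u1 * X + u2 * Y)) by lra. apply sqrt_le_1_alt.
    unfold Rsqr. pose proof (pow2_ge_0 (u1 * Y - u2 * X)). replace (X ^ 2 + Y ^ 2) with ((u1 * u1 + u2 * u2) * (X ^ 2 + Y ^ 2)) by (rewrite Hu; ring). nra.
Qed.

Lemma quad_le_opnorm m v1 v2 : quadR m v1 v2 <= opnorm m * (v1 * v1 + v2 * v2).
Proof.
  destruct (Req_dec (v1 * v1 + v2 * v2) 0) as [H0|H0].
  - assert (v1 = 0) by nra. assert (v2 = 0) by nra. subst. unfold quadR, bilR. lra.
  - set (s := sqrt (v1 * v1 + v2 * v2)).
    assert (Hs2 : s * s = v1 * v1 + v2 * v2) by (apply sqrt_sqrt; nra).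
    assert (Hs : 0 < s) by (apply sqrt_lt_R0; nra).
    pose proof (opnorm_ge m (v1 / s) (v2 / s)) as Ho.
    assert (Hu : v1 / s * (v1 / s) + v2 / s * (v2 / s) = 1).
    { replace (v1 / s * (v1 / s) + v2 / s * (v2 / s)) with ((v1*v1+v2*v2)/(s*s)) by (field; lra). rewrite <- Hs2. field. lra. }
    specialize (Ho Hu).
    pose proof (cs_sqrt (v1/s) (v2/s) (ma m * (v1 / s) + mb m * (v2 / s)) (mb m * (v1 / s) + mc m * (v2 / s)) Hu) as Hc.
    assert (Heq : v1 / s * (ma m * (v1 / s) + mb m * (v2 / s)) + v2 / s * (mb m * (v1 / s) + mc m * (v2 / s)) = quadR m v1 v2 / (s * s)).
    { unfold quadR, bilR. field. lra. }
    rewrite Heq in Hc. rewrite <- Hs2.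
    assert (quadR m v1 v2 / (s * s) <= opnorm m) by lra.
    apply (Rmult_le_compat_r (s * s)) in H; [|nra].
    unfold Rdiv in H. rewrite Rmult_assoc, Rinv_l in H by nra. lra.
Qed.

Lemma spd_pos m : spd m -> 0 < ma m /\ 0 < det2 m /\ 0 < mc m.
Proof.
  intros H. pose proof (H 1 0 (or_introl R1_neq_R0)) as H1.
  unfold quadR, bilR in H1. assert (Ha : 0 < ma m) by nra.
  assert (Hne : - mb m <> 0 \/ ma m <> 0) by (right; lra).
  pose proof (H (- mb m) (ma m) Hne) as H2. unfold quadR, bilR in H2. unfold det2.
  assert (0 < ma m * (ma m * mc m - mb m * mb m)) by nra.
  assert (0 < ma m * mc m - mb m * mb m).
  { destruct (Rle_dec (ma m * mc m - mb m * mb m) 0); [nra|lra]. }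
  split; [lra|split; [lra|nra]].
Qed.

Section Spec.
Variable m : sym2.
Hypothesis Hm : spd m.

Let N1 := opnorm m.
Let N2 := opnorm (inv2 m).

Lemma dN2_le : det2 m * N2 <= N1.
Proof.
  destruct (spd_pos m Hm) as [Ha [Hd Hc]].
  assert (N2 <= N1 / det2 m).
  { unfold N2. apply opnorm_le. intros x1 x2 Hu.
    pose proof (opnorm_ge m (- x2) x1) as H. assert (Hu' : - x2 * - x2 + x1 * x1 = 1) by lra.
    specialize (H Hu'). fold N1 in H.
    replace ((ma (inv2 m) * x1 + mb (inv2 m) * x2) ^ 2 + (mb (inv2 m) * x1 + mc (inv2 m) * x2) ^ 2)
      with (((ma m * - x2 + mb m * x1) ^ 2 + (mb m * - x2 + mc m * x1) ^ 2) / (det2 m * det2 m)).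
    2:{ unfold inv2; simpl. field. lra. }
    rewrite sqrt_div_alt by nra. rewrite sqrt_square by lra.
    unfold Rdiv. apply Rmult_le_compat_r; [left; apply Rinv_0_lt_compat; lra|]. exact H. }
  apply (Rmult_le_compat_l (det2 m)) in H; [|lra]. 
  replace (det2 m * (N1 / det2 m)) with N1 in H by (field; lra). exact H.
Qed.

Lemma N1_pos : 0 < N1.
Proof.
  destruct (spd_pos m Hm) as [Ha [Hd Hc]].
  pose proof (quad_le_opnorm m 1 0). unfold quadR, bilR in H. fold N1 in H. nra.
Qed.

Lemma N2_pos : 0 < N2.
Proof.
  destruct (spd_pos m Hm) as [Ha [Hd Hc]].
  pose proof (quad_le_opnorm (inv2 m) 1 0) as H. replace (quadR (inv2 m) 1 0) with (mc m / det2 m) in H by (unfold quadR, bilR, inv2; simpl; ring). unfold N2.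
  assert (0 < mc m / det2 m) by (apply Rdiv_lt_0_compat; lra). nra.
Qed.

Lemma kappa_pos : 0 < kappa m.
Proof. unfold kappa. apply sqrt_lt_R0. pose proof N1_pos as A. pose proof N2_pos as B. unfold N1, N2 in *. apply Rmult_lt_0_compat; assumption. Qed.

End Spec.

Definition Mm (m : sym2) := scale2 (sqrt (det2 m)) (inv2 m).

Lemma quad_scale s m v1 v2 : quadR (scale2 s m) v1 v2 = s * quadR m v1 v2.
Proof. unfold quadR, bilR, scale2; simpl; ring. Qed.

Lemma quad_inv_perp m v1 v2 : 0 < det2 m -> quadR (inv2 m) (- v2) v1 = quadR m v1 v2 / det2 m.
Proof. intros. unfold quadR, bilR, inv2; simpl. field. lra. Qed.

Lemma PQ_ge m v1 v2 : 0 < det2 m ->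
  (v1 * v1 + v2 * v2) * (v1 * v1 + v2 * v2) <= quadR m v1 v2 * quadR (inv2 m) v1 v2.
Proof.
  intros Hd.
  assert (E : quadR m v1 v2 * quadR (inv2 m) v1 v2 - (v1 * v1 + v2 * v2) * (v1 * v1 + v2 * v2)
     = (mb m * v1 * v1 - mb m * v2 * v2 + (mc m - ma m) * v1 * v2) ^ 2 / det2 m).
  { unfold quadR, bilR, inv2, det2 in *; simpl. field. lra. }
  assert (0 <= (mb m * v1 * v1 - mb m * v2 * v2 + (mc m - ma m) * v1 * v2) ^ 2 / det2 m).
  { apply Rmult_le_pos; [apply pow2_ge_0|left; apply Rinv_0_lt_compat; lra]. }
  lra.
Qed.

Lemma quad_spd_nonneg m v1 v2 : spd m -> 0 <= quadR m v1 v2.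
Proof.
  intros H. destruct (Req_dec v1 0); destruct (Req_dec v2 0).
  - subst. unfold quadR, bilR. lra.
  - left; apply H; auto.
  - left; apply H; auto.
  - left; apply H; auto.
Qed.

Lemma spd_inv m : spd m -> spd (inv2 m).
Proof.
  intros H v1 v2 Hv. destruct (spd_pos m H) as [Ha [Hd Hc]].
  assert (E : quadR (inv2 m) v1 v2 = quadR m v2 (- v1) / det2 m).
  { unfold quadR, bilR, inv2; simpl. field. lra. }
  rewrite E. apply Rdiv_lt_0_compat; [|lra]. apply H. destruct Hv; [right; lra|left; lra].
Qed.

Lemma kappa_upper m v1 v2 : spd m -> quadR (Mm m) v1 v2 <= kappa m * (v1 * v1 + v2 * v2).
Proof.
  intros Hm. destruct (spd_pos m Hm) as [Ha [Hd Hc]]. unfold Mm. rewrite quad_scale.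
  pose proof (quad_le_opnorm (inv2 m) v1 v2) as H1.
  pose proof (dN2_le m Hm) as H2. pose proof (N2_pos m Hm) as H3.
  pose proof (quad_spd_nonneg _ v1 v2 (spd_inv m Hm)) as H4.
  assert (Hs : sqrt (det2 m) * opnorm (inv2 m) <= kappa m).
  { unfold kappa. replace (sqrt (det2 m) * opnorm (inv2 m)) with (sqrt (det2 m * (opnorm (inv2 m) * opnorm (inv2 m)))).
    2:{ rewrite sqrt_mult_alt by lra. rewrite sqrt_square by lra. reflexivity. }
    apply sqrt_le_1_alt. nra. }
  pose proof (sqrt_pos (det2 m)).
  apply Rle_trans with (sqrt (det2 m) * (opnorm (inv2 m) * (v1 * v1 + v2 * v2))).
  - apply Rmult_le_compat_l; auto.
  - rewrite <- Rmult_assoc. apply Rmult_le_compat_r; [nra|exact Hs].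
Qed.

Lemma kappa_lower m v1 v2 : spd m -> v1 * v1 + v2 * v2 <= kappa m * quadR (Mm m) v1 v2.
Proof.
  intros Hm. destruct (spd_pos m Hm) as [Ha [Hd Hc]]. unfold Mm. rewrite quad_scale.
  set (s := v1 * v1 + v2 * v2).
  destruct (Req_dec s 0) as [Hs0|Hs0].
  { rewrite Hs0. pose proof (kappa_pos m Hm). pose proof (sqrt_pos (det2 m)).
    pose proof (quad_spd_nonneg _ v1 v2 (spd_inv m Hm)). 
    apply Rmult_le_pos; [lra|apply Rmult_le_pos; lra]. }
  assert (Hs : 0 < s) by (unfold s in *; nra).
  set (p := quadR m v1 v2). set (q := quadR (inv2 m) v1 v2).
  pose proof (quad_le_opnorm m v1 v2) as H1. fold p s in H1.
  pose proof (quad_le_opnorm (inv2 m) (- v2) v1) as H2. rewrite quad_inv_perp in H2 by lra.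
  replace (- v2 * - v2 + v1 * v1) with s in H2 by (unfold s; ring). fold p in H2.
  pose proof (PQ_ge m v1 v2 Hd) as H3. fold s p q in H3.
  pose proof (quad_spd_nonneg _ v1 v2 Hm) as Hp. fold p in Hp.
  pose proof (quad_spd_nonneg _ v1 v2 (spd_inv m Hm)) as Hq. fold q in Hq.
  set (N1 := opnorm m) in *. set (N2 := opnorm (inv2 m)) in *.
  assert (Hd2 : sqrt (det2 m) * sqrt (det2 m) = det2 m) by (apply sqrt_sqrt; lra).
  assert (Hk2 : kappa m * kappa m = N1 * N2).
  { unfold kappa. apply sqrt_sqrt. pose proof (N1_pos m Hm); pose proof (N2_pos m Hm). unfold N1, N2 in *. nra. }
  pose proof (kappa_pos m Hm). pose proof (sqrt_pos (det2 m)).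
  (* p/d <= N2 s ; p <= N1 s  => p^2/d <= N1 N2 s^2 ; s^4 <= p^2 q^2 *)
  assert (HA : p * p <= N1 * N2 * det2 m * s * s).
  { assert (Hpd : p / det2 m <= N2 * s) by lra.
    assert (p <= N2 * s * det2 m).
    { apply (Rmult_le_compat_r (det2 m)) in Hpd; [|lra]. unfold Rdiv in Hpd. rewrite Rmult_assoc, Rinv_l in Hpd; lra. }
    nra. }
  set (X := kappa m * (sqrt (det2 m) * q)).
  assert (HX : 0 <= X) by (unfold X; apply Rmult_le_pos; [lra|apply Rmult_le_pos; lra]).
  assert (HX2 : X * X = N1 * N2 * det2 m * q * q).
  { unfold X. replace (kappa m * (sqrt (det2 m) * q) * (kappa m * (sqrt (det2 m) * q)))
      with ((kappa m * kappa m) * (sqrt (det2 m) * sqrt (det2 m)) * q * q) by ring. rewrite Hk2, Hd2. ring. }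
  assert (s * s * (s * s) <= X * X * (s * s)).
  { rewrite HX2. nra. }
  assert (s * s <= X * X) by nra.
  nra.
Qed.

Lemma creep (P : R -> R -> Prop) :
  (forall a b c, a <= b -> b <= c -> P a b -> P b c -> P a c) ->
  (forall t, 0 <= t <= 1 -> exists d, 0 < d /\ forall a b, t - d < a -> a <= t -> t <= b -> b < t + d -> P a b) ->
  P 0 1.
Proof.
  intros Hu Hl.
  set (S := fun s => 0 <= s <= 1 /\ P 0 s).
  assert (HS0 : S 0).
  { split; [lra|]. destruct (Hl 0 ltac:(lra)) as [d [Hd H]]. apply H; lra. }
  assert (Hb : bound S) by (exists 1; intros s [Hs _]; lra).
  destruct (completeness S Hb (ex_intro _ 0 HS0)) as [sg [Hub Hlub]].
  assert (Hsg0 : 0 <= sg) by (apply Hub; exact HS0).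
  assert (Hsg1 : sg <= 1) by (apply Hlub; intros s [Hs _]; lra).
  destruct (Hl sg ltac:(lra)) as [d [Hd Hloc]].
  assert (Hex : exists s, S s /\ sg - d < s).
  { apply NNPP. intro Hn. assert (sg <= sg - d); [|lra].
    apply Hlub. intros s Hs. destruct (Rle_dec s (sg - d)); auto. exfalso; apply Hn; exists s; split; auto; lra. }
  destruct Hex as [s [[Hs01 Hs] Hsd]].
  assert (Hss : s <= sg) by (apply Hub; split; auto).
  destruct (Rlt_dec sg 1) as [Hlt|Hge].
  - set (b := Rmin 1 (sg + d / 2)).
    assert (Hb1 : sg < b) by (unfold b; apply Rmin_glb_lt; lra).
    assert (Hb2 : b <= 1) by (unfold b; apply Rmin_l).
    assert (Hb3 : b < sg + d) by (unfold b; eapply Rle_lt_trans; [apply Rmin_r|lra]).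
    assert (S b) by (split; [lra|]; apply (Hu 0 s b); try lra; auto; apply Hloc; lra).
    assert (b <= sg) by (apply Hub; auto). lra.
  - assert (sg = 1) by lra. subst sg. apply (Hu 0 s 1); try lra; auto. apply Hloc; lra.
Qed.

Lemma bounded_square (g : R -> R -> R) :
  (forall x0 y0, exists r, 0 < r /\ exists B, forall x y,
      (x - x0) ^ 2 + (y - y0) ^ 2 < r ^ 2 -> g x y <= B) ->
  exists B, forall x y, 0 <= x <= 1 -> 0 <= y <= 1 -> g x y <= B.
Proof.
  intros Hloc.
  assert (HQ : forall x0, exists d, 0 < d /\ exists B, forall x y, Rabs (x - x0) < d -> 0 <= y <= 1 -> g x y <= B).
  { intros x0.
    set (Q := fun a b => exists d, 0 < d /\ exists B, forall x y, Rabs (x - x0) < d -> a <= y <= b -> g x y <= B).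
    assert (Q 0 1); [|exact H].
    apply creep.
    - intros a b c Hab Hbc [d1 [Hd1 [B1 H1]]] [d2 [Hd2 [B2 H2]]].
      exists (Rmin d1 d2); split; [apply Rmin_glb_lt; auto|]. exists (Rmax B1 B2).
      intros x y Hx Hy. destruct (Rle_dec y b).
      + eapply Rle_trans; [apply H1|apply Rmax_l]; [eapply Rlt_le_trans; [exact Hx|apply Rmin_l]|lra].
      + eapply Rle_trans; [apply H2|apply Rmax_r]; [eapply Rlt_le_trans; [exact Hx|apply Rmin_r]|lra].
    - intros t Ht. destruct (Hloc x0 t) as [r [Hr [B HB]]].
      exists (r / 2); split; [lra|]. intros a b Ha1 Ha2 Hb1 Hb2.
      exists (r / 2); split; [lra|]. exists B. intros x y Hx Hy. apply HB.
      apply Rabs_def2 in Hx. nra. }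
  set (P := fun a b => exists B, forall x y, a <= x <= b -> 0 <= y <= 1 -> g x y <= B).
  assert (P 0 1); [|exact H].
  apply creep.
  - intros a b c Hab Hbc [B1 H1] [B2 H2]. exists (Rmax B1 B2).
    intros x y Hx Hy. destruct (Rle_dec x b).
    + eapply Rle_trans; [apply H1|apply Rmax_l]; auto; lra.
    + eapply Rle_trans; [apply H2|apply Rmax_r]; auto; lra.
  - intros t Ht. destruct (HQ t) as [d [Hd [B HB]]]. exists d; split; auto.
    intros a b Ha1 Ha2 Hb1 Hb2. exists B. intros x y Hx Hy. apply HB; auto.
    apply Rabs_def1; lra.
Qed.

Section Per.
Variable D : field.
Hypothesis HDper : field_periodic D.

Lemma per_nat x y k : D (x + INR k) y = D x y /\ D x (y + INR k) = D x y.
Proof.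
  induction k as [|k IH].
  - simpl. rewrite !Rplus_0_r. auto.
  - rewrite S_INR. destruct IH as [IH1 IH2].
    replace (x + (INR k + 1)) with (x + INR k + 1) by ring.
    replace (y + (INR k + 1)) with (y + INR k + 1) by ring.
    destruct (HDper (x + INR k) y) as [A _]. destruct (HDper x (y + INR k)) as [_ B].
    rewrite A, B. auto.
Qed.

Lemma per_Z x y (k l : Z) : D (x + IZR k) (y + IZR l) = D x y.
Proof.
  assert (Hx : forall x y (k : Z), D (x + IZR k) y = D x y).
  { intros x' y' k'. destruct (Z_le_gt_dec 0 k') as [Hk|Hk].
    - rewrite <- (Z2Nat.id k') by lia. rewrite <- INR_IZR_INZ. apply per_nat.
    - replace k' with (- Z.of_nat (Z.to_nat (- k')))%Z by lia.
      rewrite opp_IZR, <- INR_IZR_INZ.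
      set (t := INR _). pose proof (proj1 (per_nat (x' + - t) y' (Z.to_nat (- k')))) as H.
      fold t in H. replace (x' + - t + t) with x' in H by ring. auto. }
  assert (Hy : forall x y (k : Z), D x (y + IZR k) = D x y).
  { intros x' y' k'. destruct (Z_le_gt_dec 0 k') as [Hk|Hk].
    - rewrite <- (Z2Nat.id k') by lia. rewrite <- INR_IZR_INZ. apply per_nat.
    - replace k' with (- Z.of_nat (Z.to_nat (- k')))%Z by lia.
      rewrite opp_IZR, <- INR_IZR_INZ.
      set (t := INR _). pose proof (proj2 (per_nat x' (y' + - t) (Z.to_nat (- k')))) as H.
      fold t in H. replace (y' + - t + t) with y' in H by ring. auto. }
  rewrite Hx, Hy. reflexivity.
Qed.

Lemma reduce01 x : exists k : Z, 0 <= x - IZR k <= 1.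
Proof.
  exists (Int_part x). pose proof (base_Int_part x). lra.
Qed.
End Per.

Lemma kappa_sq_le m : spd m -> kappa m * kappa m <= Sabs m * Sabs m / det2 m.
Proof.
  intros Hm. destruct (spd_pos m Hm) as [Ha [Hd Hc]].
  pose proof (N1_pos m Hm). pose proof (N2_pos m Hm). pose proof (dN2_le m Hm).
  pose proof (opnorm_le_S m).
  unfold kappa. rewrite sqrt_sqrt by nra.
  assert (opnorm (inv2 m) <= opnorm m / det2 m).
  { apply (Rmult_le_reg_l (det2 m)); auto. replace (det2 m * (opnorm m / det2 m)) with (opnorm m) by (field; lra). lra. }
  apply Rle_trans with (opnorm m * (opnorm m / det2 m)).
  - apply Rmult_le_compat_l; lra.
  - unfold Rdiv. rewrite <- Rmult_assoc. apply Rmult_le_compat_r; [left; apply Rinv_0_lt_compat; lra|]. nra.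
Qed.

Lemma kappa_le_S m : spd m -> kappa m <= Sabs m * Sabs m / det2 m + 1.
Proof.
  intros Hm. pose proof (kappa_sq_le m Hm). pose proof (kappa_pos m Hm).
  destruct (Rle_dec (kappa m) 1); nra.
Qed.

Lemma abs_mul_le x y e : Rabs x < e -> Rabs (x * y) <= e * Rabs y.
Proof. intros H. rewrite Rabs_mult. apply Rmult_le_compat_r; [apply Rabs_pos|lra]. Qed.

Lemma det_close a0 b0 c0 a b c e : 0 < e <= 1 -> Rabs (a - a0) < e -> Rabs (b - b0) < e -> Rabs (c - c0) < e ->
  Rabs ((a * c - b * b) - (a0 * c0 - b0 * b0)) <= e * (Rabs a0 + 2 * Rabs b0 + Rabs c0 + 2).
Proof.
  intros He Ha Hb Hc.
  replace ((a * c - b * b) - (a0 * c0 - b0 * b0)) with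
    ((a - a0) * c0 + (c - c0) * a0 + (a - a0) * (c - c0) + (- 2) * ((b - b0) * b0) + - ((b - b0) * (b - b0))) by ring.
  pose proof (abs_mul_le (a - a0) c0 e Ha). pose proof (abs_mul_le (c - c0) a0 e Hc).
  pose proof (abs_mul_le (b - b0) b0 e Hb).
  assert (Rabs ((a - a0) * (c - c0)) <= e) by (rewrite Rabs_mult; pose proof (Rabs_pos (a-a0)); pose proof (Rabs_pos (c-c0)); nra).
  assert (Rabs ((b - b0) * (b - b0)) <= e) by (rewrite Rabs_mult; pose proof (Rabs_pos (b-b0)); nra).
  assert (Rabs (-2 * ((b - b0) * b0)) <= 2 * (e * Rabs b0)) by (rewrite Rabs_mult, Rabs_left by lra; lra).
  assert (Rabs (- ((b - b0) * (b - b0))) <= e) by (rewrite Rabs_Ropp; lra).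
  repeat (eapply Rle_trans; [apply Rabs_triang|]). 
  pose proof (Rabs_triang ((a - a0) * c0 + (c - c0) * a0) ((a - a0) * (c - c0))).
  pose proof (Rabs_triang ((a - a0) * c0) ((c - c0) * a0)).
  pose proof (Rabs_triang ((a - a0) * c0 + (c - c0) * a0 + (a - a0) * (c - c0)) (-2 * ((b - b0) * b0))).
  lra.
Qed.

Lemma Sabs_close a0 b0 c0 a b c e : Rabs (a - a0) < e -> Rabs (b - b0) < e -> Rabs (c - c0) < e ->
  Sabs (Sym2 a b c) <= Sabs (Sym2 a0 b0 c0) + 4 * e.
Proof.
  intros Ha Hb Hc. unfold Sabs; simpl.
  pose proof (Rabs_triang_inv a a0). pose proof (Rabs_triang_inv b b0). pose proof (Rabs_triang_inv c c0). lra.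
Qed.

Section KB.
Variable D : field.
Hypothesis HDspd : forall x y, spd (D x y).
Hypothesis HDcont : field_continuous D.
Hypothesis HDper : field_periodic D.

Lemma kappa_local x0 y0 : exists r, 0 < r /\ exists B, forall x y,
      (x - x0) ^ 2 + (y - y0) ^ 2 < r ^ 2 -> kappa (D x y) <= B.
Proof.
  set (m0 := D x0 y0). destruct (spd_pos m0 (HDspd x0 y0)) as [Ha0 [Hd0 Hc0]].
  set (S0 := Sabs m0).
  assert (HS0 : 0 <= S0) by (unfold S0, Sabs; pose proof (Rabs_pos (ma m0)); pose proof (Rabs_pos (mb m0)); pose proof (Rabs_pos (mc m0)); lra).
  set (e := Rmin 1 (det2 m0 / (2 * (S0 + 2)))).
  assert (He : 0 < e <= 1).
  { unfold e. split; [apply Rmin_glb_lt; [lra|apply Rdiv_lt_0_compat; lra]|apply Rmin_l]. }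
  assert (He2 : e * (S0 + 2) <= det2 m0 / 2).
  { assert (e <= det2 m0 / (2 * (S0 + 2))) by (unfold e; apply Rmin_r).
    apply (Rmult_le_compat_r (S0 + 2)) in H; [|lra].
    replace (det2 m0 / (2 * (S0 + 2)) * (S0 + 2)) with (det2 m0 / 2) in H by (field; lra). exact H. }
  destruct HDcont as [Ca [Cb Cc]].
  destruct (Ca x0 y0 e ltac:(lra)) as [d1 [Hd1 H1]].
  destruct (Cb x0 y0 e ltac:(lra)) as [d2 [Hd2 H2]].
  destruct (Cc x0 y0 e ltac:(lra)) as [d3 [Hd3 H3]].
  exists (Rmin d1 (Rmin d2 d3)). split; [repeat apply Rmin_glb_lt; auto|].
  exists ((S0 + 4) * (S0 + 4) / (det2 m0 / 2) + 1).
  intros x y Hxy.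
  assert (Hr1 : Rmin d1 (Rmin d2 d3) <= d1) by apply Rmin_l.
  assert (Hr2 : Rmin d1 (Rmin d2 d3) <= d2) by (eapply Rle_trans; [apply Rmin_r|apply Rmin_l]).
  assert (Hr3 : Rmin d1 (Rmin d2 d3) <= d3) by (eapply Rle_trans; [apply Rmin_r|apply Rmin_r]).
  assert (0 < Rmin d1 (Rmin d2 d3)) by (repeat apply Rmin_glb_lt; auto).
  specialize (H1 x y ltac:(nra)). specialize (H2 x y ltac:(nra)). specialize (H3 x y ltac:(nra)).
  set (m := D x y) in *. fold m0 in H1, H2, H3.
  pose proof (det_close _ _ _ _ _ _ e He H1 H2 H3) as Hdet.
  pose proof (Sabs_close _ _ _ _ _ _ e H1 H2 H3) as HS.
  replace (Sym2 (ma m) (mb m) (mc m)) with m in HS by (destruct m; reflexivity).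
  replace (Sym2 (ma m0) (mb m0) (mc m0)) with m0 in HS by (destruct m0; reflexivity).
  fold S0 in HS.
  assert (Hdm : det2 m0 / 2 <= det2 m).
  { unfold det2 in *. unfold S0, Sabs in He2. pose proof (Rle_abs (- (ma m * mc m - mb m * mb m - (ma m0 * mc m0 - mb m0 * mb m0)))) as Hdd. rewrite Rabs_Ropp in Hdd. lra. }
  pose proof (kappa_le_S m (HDspd x y)).
  assert (0 <= Sabs m) by (unfold Sabs; pose proof (Rabs_pos (ma m)); pose proof (Rabs_pos (mb m)); pose proof (Rabs_pos (mc m)); lra).
  assert (Sabs m * Sabs m / det2 m <= (S0 + 4) * (S0 + 4) / (det2 m0 / 2)).
  { unfold Rdiv. apply Rmult_le_compat; try nra.
    - left; apply Rinv_0_lt_compat; lra.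
    - apply Rinv_le_contravar; lra. }
  lra.
Qed.

Lemma kappa_bounded : exists B, forall x y, kappa (D x y) <= B.
Proof.
  destruct (bounded_square (fun x y => kappa (D x y)) kappa_local) as [B HB].
  exists B. intros x y. destruct (reduce01 x) as [k Hk]. destruct (reduce01 y) as [l Hl].
  pose proof (HB _ _ Hk Hl). rewrite <- (per_Z D HDper (x - IZR k) (y - IZR l) k l) in H.
  replace (x - IZR k + IZR k) with x in H by ring. replace (y - IZR l + IZR l) with y in H by ring. exact H.
Qed.

Lemma kappaB_ge x y : kappa (D x y) <= kappaB D.
Proof.
  destruct kappa_bounded as [B HB]. unfold kappaB. apply sup_R_ub.
  - exists B. intros r [x' [y' ->]]. apply HB.
  - exists x, y; reflexivity.
Qed.

Lemma kappaB_pos : 0 < kappaB D.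
Proof. eapply Rlt_le_trans; [apply (kappa_pos _ (HDspd 0 0))|apply kappaB_ge]. Qed.
End KB.

Lemma approx_sq t0 X Y : 0 <= Y -> 0 <= t0 ->
  (forall e, 0 < e -> exists s, s < t0 + e /\ t0 <= s /\ X <= s ^ 2 * Y) -> X <= t0 ^ 2 * Y.
Proof.
  intros HY Ht H. destruct (Rle_dec X (t0 ^ 2 * Y)) as [|Hn]; auto. exfalso.
  destruct (Req_dec Y 0) as [HY0|HY0].
  { destruct (H 1 ltac:(lra)) as [s [_ [_ Hs]]]. rewrite HY0 in *. lra. }
  set (g := X - t0 ^ 2 * Y).
  set (e := Rmin 1 (g / (2 * (2 * t0 + 1) * Y))).
  assert (He : 0 < e) by (unfold e; apply Rmin_glb_lt; [lra|apply Rdiv_lt_0_compat; unfold g; nra]).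
  assert (He1 : e <= 1) by apply Rmin_l.
  assert (He2 : e * (2 * (2 * t0 + 1) * Y) <= g).
  { assert (e <= g / (2 * (2 * t0 + 1) * Y)) by apply Rmin_r.
    apply (Rmult_le_compat_r (2 * (2 * t0 + 1) * Y)) in H0; [|nra].
    replace (g / (2 * (2 * t0 + 1) * Y) * (2 * (2 * t0 + 1) * Y)) with g in H0 by (field; nra). exact H0. }
  destruct (H e He) as [s [Hs1 [Hs2 Hs3]]].
  assert (s ^ 2 <= t0 ^ 2 + e * (2 * t0 + 1)) by nra.
  assert (s ^ 2 * Y <= (t0 ^ 2 + e * (2 * t0 + 1)) * Y) by nra.
  unfold g in He2. nra.
Qed.

Section Tau.
Variable D : field.
Hypothesis HDspd : forall x y, spd (D x y).
Hypothesis HDcont : field_continuous D.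
Hypothesis HDper : field_periodic D.

Definition qM (x y v1 v2 : R) := quadR (Mof D x y) v1 v2.

Lemma qM_bounds x y v1 v2 :
  (v1 * v1 + v2 * v2) <= kappaB D * qM x y v1 v2 /\ qM x y v1 v2 <= kappaB D * (v1 * v1 + v2 * v2).
Proof.
  pose proof (kappa_lower (D x y) v1 v2 (HDspd x y)).
  pose proof (kappa_upper (D x y) v1 v2 (HDspd x y)).
  pose proof (kappaB_ge D HDspd HDcont HDper x y).
  pose proof (kappa_pos _ (HDspd x y)).
  assert (Hq : 0 <= qM x y v1 v2).
  { unfold qM, Mof. fold (Mm (D x y)). unfold Mm. rewrite quad_scale.
    apply Rmult_le_pos; [apply sqrt_pos|apply quad_spd_nonneg, spd_inv, HDspd]. }
  unfold qM, Mof in *. fold (Mm (D x y)) in *. split; nra.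
Qed.

Lemma qM_nonneg x y v1 v2 : 0 <= qM x y v1 v2.
Proof.
  unfold qM, Mof. fold (Mm (D x y)). unfold Mm. rewrite quad_scale.
  apply Rmult_le_pos; [apply sqrt_pos|apply quad_spd_nonneg, spd_inv, HDspd].
Qed.

Definition tau_ok p1 p2 q1 q2 t := 1 <= t /\ forall v1 v2,
  qM p1 p2 v1 v2 <= t ^ 2 * qM q1 q2 v1 v2 /\ qM q1 q2 v1 v2 <= t ^ 2 * qM p1 p2 v1 v2.

Lemma tau_set_ok p1 p2 q1 q2 t : tau_set D p1 p2 q1 q2 t <-> tau_ok p1 p2 q1 q2 t.
Proof.
  unfold tau_set, tau_ok, loewner_le. split.
  - intros [H1 [H2 H3]]. split; auto. intros v1 v2. specialize (H2 v1 v2). specialize (H3 v1 v2).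
    rewrite quad_scale in H2, H3. unfold qM. split; auto.
    assert (0 < t ^ 2) by nra.
    apply (Rmult_le_compat_l (t ^ 2)) in H2; [|lra]. rewrite <- Rmult_assoc, Rinv_r in H2 by lra. lra.
  - intros [H1 H2]. split; auto. split; intros v1 v2; destruct (H2 v1 v2) as [A B]; rewrite quad_scale; unfold qM in *; auto.
    assert (0 < t ^ 2) by nra.
    apply (Rmult_le_reg_l (t ^ 2)); auto. rewrite <- Rmult_assoc, Rinv_r by lra. lra.
Qed.

Lemma tau_ok_K p1 p2 q1 q2 : tau_ok p1 p2 q1 q2 (Rmax 1 (kappaB D)).
Proof.
  split; [apply Rmax_l|]. intros v1 v2.
  pose proof (qM_bounds p1 p2 v1 v2). pose proof (qM_bounds q1 q2 v1 v2).
  pose proof (kappaB_pos D HDspd HDcont HDper). pose proof (Rmax_r 1 (kappaB D)). pose proof (Rmax_l 1 (kappaB D)).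
  pose proof (qM_nonneg p1 p2 v1 v2). pose proof (qM_nonneg q1 q2 v1 v2).
  set (K := kappaB D) in *. set (T := Rmax 1 K) in *.
  assert (K * K <= T ^ 2) by nra.
  split; nra.
Qed.

Lemma tau_spec p1 p2 q1 q2 :
  tau_ok p1 p2 q1 q2 (tau D p1 p2 q1 q2) /\ tau D p1 p2 q1 q2 <= Rmax 1 (kappaB D).
Proof.
  set (S := tau_set D p1 p2 q1 q2).
  set (T := fun r => S (- r)).
  assert (HT : bound T) by (exists (-1); intros r Hr; apply tau_set_ok in Hr; destruct Hr; lra).
  assert (HTn : exists r, T r).
  { exists (- Rmax 1 (kappaB D)). unfold T. rewrite Ropp_involutive. apply tau_set_ok, tau_ok_K. }
  destruct (completeness T HT HTn) as [L [HL1 HL2]].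
  set (t0 := - L).
  assert (Hmin : forall s, S s -> t0 <= s).
  { intros s Hs. assert (- s <= L) by (apply HL1; unfold T; rewrite Ropp_involutive; auto). unfold t0; lra. }
  assert (Happ : forall e, 0 < e -> exists s, S s /\ s < t0 + e).
  { intros e He. apply NNPP. intros Hn. assert (L <= L - e); [|lra].
    apply HL2. intros r Hr. destruct (Rle_dec r (L - e)); auto. exfalso. apply Hn. exists (- r). split; auto. unfold t0; lra. }
  assert (Ht01 : 1 <= t0).
  { assert (L <= -1); [|unfold t0; lra]. apply HL2. intros r Hr. apply tau_set_ok in Hr. destruct Hr; lra. }
  assert (Hok : tau_ok p1 p2 q1 q2 t0).
  { split; auto. intros v1 v2. split.
    - apply approx_sq; [apply qM_nonneg|lra|]. intros e He. destruct (Happ e He) as [s [Hs Hse]].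
      exists s. split; auto. split; [apply Hmin; auto|]. apply tau_set_ok in Hs. apply Hs.
    - apply approx_sq; [apply qM_nonneg|lra|]. intros e He. destruct (Happ e He) as [s [Hs Hse]].
      exists s. split; auto. split; [apply Hmin; auto|]. apply tau_set_ok in Hs. apply Hs. }
  assert (Hex : exists t, S t /\ forall s, S s -> t <= s) by (exists t0; split; auto; apply tau_set_ok; auto).
  pose proof (the_R_spec _ Hex) as [H1 H2]. fold (tau D p1 p2 q1 q2) in H1, H2.
  split; [apply tau_set_ok; auto|]. apply H2. apply tau_set_ok, tau_ok_K.
Qed.

Lemma tau_h_close h p1 p2 q1 q2 : 0 <= h ->
  sqrt ((p1 - q1) ^ 2 + (p2 - q2) ^ 2) <= 2 * kappaB D * h ->
  forall v1 v2, qM p1 p2 v1 v2 <= tau_h D h ^ 2 * qM q1 q2 v1 v2 /\ qM q1 q2 v1 v2 <= tau_h D h ^ 2 * qM p1 p2 v1 v2.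
Proof.
  intros Hh Hd v1 v2.
  destruct (tau_spec p1 p2 q1 q2) as [[H1 H2] _].
  assert (Hle : tau D p1 p2 q1 q2 <= tau_h D h).
  { unfold tau_h. apply sup_R_ub.
    - exists (Rmax 1 (kappaB D)). intros r [a [b [c [d [_ ->]]]]]. apply tau_spec.
    - exists p1, p2, q1, q2. auto. }
  destruct (H2 v1 v2). pose proof (qM_nonneg p1 p2 v1 v2). pose proof (qM_nonneg q1 q2 v1 v2).
  assert (tau D p1 p2 q1 q2 ^ 2 <= tau_h D h ^ 2) by nra.
  split; nra.
Qed.
End Tau.

Lemma core_ineq K E F B T Q : 0 < K -> 1 / K <= E -> 1 / K <= F -> E * F - B * B = 1 ->
  Rabs B <= 1 / (4 * K) -> 1 <= T -> T ^ 4 <= 1 + / (3 * K ^ 2) -> E + F - 2 * Rabs B <= Q ->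
  T ^ 4 * Rmax E F < Q.
Proof.
  intros HK HE HF Hdet HB HT HT4 HQ.
  set (mn := Rmin E F). set (mx := Rmax E F).
  assert (Hmn : 1 / K <= mn) by (unfold mn; apply Rmin_glb; auto).
  assert (Hsum : mn + mx = E + F) by (unfold mn, mx, Rmin, Rmax; destruct (Rle_dec E F); lra).
  assert (Hprod : mn * mx = E * F) by (unfold mn, mx, Rmin, Rmax; destruct (Rle_dec E F); lra).
  assert (Hle : mn <= mx) by (unfold mn, mx, Rmin, Rmax; destruct (Rle_dec E F); lra).
  assert (HB0 : 0 <= Rabs B) by apply Rabs_pos.
  assert (HBsq : B * B = Rabs B * Rabs B) by (unfold Rabs; destruct (Rcase_abs B); ring).
  assert (HKm : 1 <= K * mn) by (apply (Rmult_le_compat_l K) in Hmn; [|lra]; replace (K * (1 / K)) with 1 in Hmn by (field; lra); lra).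
  assert (HKB : 4 * K * Rabs B <= 1) by (apply (Rmult_le_compat_l (4 * K)) in HB; [|lra]; replace (4 * K * (1 / (4 * K))) with 1 in HB by (field; lra); lra).
  assert (Hmn0 : 0 < mn) by (assert (0 < 1 / K) by (apply Rdiv_lt_0_compat; lra); lra).
  assert (HP : mn * mx = 1 + Rabs B * Rabs B) by lra.
  (* K^2 >= 15/16 *)
  assert (HK2 : 16 * (K * K) * (mn * mx) <= 16 * (K * K) + 1).
  { rewrite HP. assert (0 <= 4 * K * Rabs B) by nra.
    replace (16 * (K * K) * (1 + Rabs B * Rabs B)) with (16 * (K * K) + (4 * K * Rabs B) * (4 * K * Rabs B)) by ring. nra. }
  assert (HB4 : 4 * Rabs B <= mn) by nra.
  assert (H3 : 2 * mx < 3 * (K * K) * mn).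
  { assert (HKm2 : 1 <= (K * mn) * (K * mn)) by nra.
    assert (Hmm : mn * mn <= mn * mx) by nra.
    assert (HK15 : 15 <= 16 * (K * K)) by nra.
    assert (HBB : 16 * (Rabs B * Rabs B) <= mn * mn) by nra.
    assert (2 * (mn * mx) < 3 * (K * K) * (mn * mn)) by nra.
    nra. }
  assert (HT4' : (T ^ 4 - 1) * (3 * (K * K)) <= 1).
  { replace (/ (3 * K ^ 2)) with (1 / (3 * (K * K))) in HT4 by (field; lra).
    apply (Rmult_le_compat_r (3 * (K * K))) in HT4; [|nra].
    replace ((1 + 1 / (3 * (K * K))) * (3 * (K * K))) with (3 * (K * K) + 1) in HT4 by (field; lra). nra. }
  assert (HTT : 1 <= T * T) by nra.
  assert (HT40 : 1 <= T ^ 4).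
  { replace (T ^ 4) with ((T * T) * (T * T)) by ring. nra. }
  assert ((T ^ 4 - 1) * mx * 2 < mn).
  { assert ((T ^ 4 - 1) * (3 * (K * K)) * (2 * mx) <= 2 * mx) by nra.
    assert ((T ^ 4 - 1) * (3 * (K * K) * mn) <= 1 * mn) by nra.
    nra. }
  fold mx. nra.
Qed.

Definition zdet (e f : zv) : Z := (fst e * snd f - snd e * fst f)%Z.
Definition partb (v : zv) : Prop := exists w, is_basis v w \/ is_basis w v.

Lemma is_basis_det e f : is_basis e f <-> (zdet e f = 1 \/ zdet e f = -1)%Z.
Proof. unfold is_basis, zdet. tauto. Qed.

Lemma decomp e f v : is_basis e f -> exists a b : Z, v = zadd (zmul a e) (zmul b f).
Proof.
  intros H. apply is_basis_det in H. destruct e as [e1 e2], f as [f1 f2], v as [v1 v2]. unfold zdet in H; simpl in H.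
  remember (e1 * f2 - e2 * f1)%Z as d eqn:Hdd.
  exists (d * (v1 * f2 - v2 * f1))%Z, (d * (e1 * v2 - e2 * v1))%Z.
  unfold zadd, zmul; simpl. assert (Hd : (d * d = 1)%Z) by (destruct H as [H|H]; cbn in H; rewrite Hdd, H; reflexivity).
  f_equal; [transitivity (d * d * v1)%Z|transitivity (d * d * v2)%Z]; try (rewrite Hd; ring); rewrite Hdd; ring.
Qed.

Lemma partb_coef a b e f : is_basis e f -> partb (zadd (zmul a e) (zmul b f)) ->
  (a = 0 -> b = 1 \/ b = -1)%Z /\ (b = 0 -> a = 1 \/ a = -1)%Z /\ (a = b -> a = 1 \/ a = -1)%Z.
Proof.
  intros He [w Hw]. apply is_basis_det in He.
  destruct e as [e1 e2], f as [f1 f2], w as [w1 w2]. unfold is_basis, zadd, zmul in *; simpl in *.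
  repeat split; intros Hab; subst.
  - destruct Hw as [[H|H]|[H|H]].
    + assert ((b * (f1 * w2 - f2 * w1) = 1)%Z) by lia. apply Z.eq_mul_1 in H0. tauto.
    + assert ((b * (f1 * w2 - f2 * w1) = -1)%Z) by lia.
      assert ((b * (- (f1 * w2 - f2 * w1)) = 1)%Z) by lia. apply Z.eq_mul_1 in H1. tauto.
    + assert ((b * (w1 * f2 - w2 * f1) = 1)%Z) by lia. apply Z.eq_mul_1 in H0. tauto.
    + assert ((b * (- (w1 * f2 - w2 * f1)) = 1)%Z) by lia. apply Z.eq_mul_1 in H0. tauto.
  - destruct Hw as [[H|H]|[H|H]].
    + assert ((a * (e1 * w2 - e2 * w1) = 1)%Z) by lia. apply Z.eq_mul_1 in H0. tauto.
    + assert ((a * (- (e1 * w2 - e2 * w1)) = 1)%Z) by lia. apply Z.eq_mul_1 in H0. tauto.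
    + assert ((a * (w1 * e2 - w2 * e1) = 1)%Z) by lia. apply Z.eq_mul_1 in H0. tauto.
    + assert ((a * (- (w1 * e2 - w2 * e1)) = 1)%Z) by lia. apply Z.eq_mul_1 in H0. tauto.
  - destruct Hw as [[H|H]|[H|H]].
    + assert ((b * ((e1 + f1) * w2 - (e2 + f2) * w1) = 1)%Z) by lia. apply Z.eq_mul_1 in H0. tauto.
    + assert ((b * (- ((e1 + f1) * w2 - (e2 + f2) * w1)) = 1)%Z) by lia. apply Z.eq_mul_1 in H0. tauto.
    + assert ((b * (w1 * (e2 + f2) - w2 * (e1 + f1)) = 1)%Z) by lia. apply Z.eq_mul_1 in H0. tauto.
    + assert ((b * (- (w1 * (e2 + f2) - w2 * (e1 + f1))) = 1)%Z) by lia. apply Z.eq_mul_1 in H0. tauto.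
Qed.

Definition qZ (m : sym2) (v : zv) := bilZ m v v.

Lemma qZ_lin m a b e f : qZ m (zadd (zmul a e) (zmul b f)) =
  IZR a * IZR a * qZ m e + 2 * IZR a * IZR b * bilZ m e f + IZR b * IZR b * qZ m f.
Proof.
  destruct e as [e1 e2], f as [f1 f2]. unfold qZ, bilZ, bilR, zadd, zmul; simpl.
  rewrite !plus_IZR, !mult_IZR. ring.
Qed.

Lemma bilZ_sym m v w : bilZ m v w = bilZ m w v.
Proof. unfold bilZ, bilR. ring. Qed.

Lemma bilZ_opp_l m v w : bilZ m (zopp v) w = - bilZ m v w.
Proof. destruct v; unfold bilZ, bilR, zopp; simpl. rewrite !opp_IZR. ring. Qed.

Lemma qZ_opp m v : qZ m (zopp v) = qZ m v.
Proof. destruct v; unfold qZ, bilZ, bilR, zopp; simpl. rewrite !opp_IZR. ring. Qed.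

Lemma bilZ_add_l m u v w : bilZ m (zadd u v) w = bilZ m u w + bilZ m v w.
Proof. destruct u, v, w; unfold bilZ, bilR, zadd; simpl. rewrite !plus_IZR. ring. Qed.

Lemma zv_nonzero_sq (v : zv) : v <> (0%Z, 0%Z) -> 1 <= IZR (fst v) * IZR (fst v) + IZR (snd v) * IZR (snd v).
Proof.
  destruct v as [v1 v2]; simpl. intros H. rewrite <- !mult_IZR, <- plus_IZR. apply IZR_le.
  assert (v1 <> 0 \/ v2 <> 0)%Z by (destruct (Z.eq_dec v1 0); destruct (Z.eq_dec v2 0); subst; auto).
  nia.
Qed.

Lemma basis_nonzero e f : is_basis e f -> e <> (0%Z, 0%Z) /\ f <> (0%Z, 0%Z).
Proof.
  destruct e as [e1 e2], f as [f1 f2]; unfold is_basis; simpl. intros H. split; intro E; inversion E; subst; lia.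
Qed.

Lemma quad_coef_ineq (a b E F B : R) : 1 <= a * a -> 1 <= b * b -> 4 * Rabs B <= E -> 4 * Rabs B <= F ->
  E + F - 2 * Rabs B <= a * a * E + 2 * a * b * B + b * b * F.
Proof.
  intros Ha Hb HE HF.
  assert (HA : Rabs a * Rabs a = a * a) by (rewrite <- Rabs_mult; apply Rabs_right; nra).
  assert (HBb : Rabs b * Rabs b = b * b) by (rewrite <- Rabs_mult; apply Rabs_right; nra).
  assert (Hab : - (2 * (Rabs a * Rabs b) * Rabs B) <= 2 * a * b * B).
  { pose proof (Rle_abs (- (a * b * B))) as H. rewrite Rabs_Ropp, !Rabs_mult in H. lra. }
  pose proof (Rabs_pos a). pose proof (Rabs_pos b). pose proof (Rabs_pos B).
  assert (1 <= Rabs a) by (destruct (Rle_dec 1 (Rabs a)) as [|Hn]; [auto|assert (Rabs a * Rabs a < 1 * 1) by (apply Rmult_le_0_lt_compat; lra); lra]).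
  assert (1 <= Rabs b) by (destruct (Rle_dec 1 (Rabs b)) as [|Hn]; [auto|assert (Rabs b * Rabs b < 1 * 1) by (apply Rmult_le_0_lt_compat; lra); lra]).
  assert (Rabs a * Rabs a + Rabs b * Rabs b >= 2 * (Rabs a * Rabs b)) by (pose proof (pow2_ge_0 (Rabs a - Rabs b)); nra).
  assert (1 <= Rabs a * Rabs b) by nra.
  assert ((a * a - 1) * E + (b * b - 1) * F >= (a * a - 1) * (4 * Rabs B) + (b * b - 1) * (4 * Rabs B)) by nra.
  nra.
Qed.

Section Stab.
Variables (M M' : sym2) (K T : R) (e f : zv).
Hypothesis Hbasis : is_basis e f.
Hypothesis HK : 0 < K.
Hypothesis HE : 1 / K <= qZ M e.
Hypothesis HF : 1 / K <= qZ M f.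
Hypothesis Hdet : qZ M e * qZ M f - bilZ M e f * bilZ M e f = 1.
Hypothesis HB : Rabs (bilZ M e f) <= 1 / (4 * K).
Hypothesis HT : 1 <= T.
Hypothesis HT4 : T ^ 4 <= 1 + Rinv (3 * K ^ 2).
Hypothesis HMM : forall v, qZ M v <= T ^ 2 * qZ M' v /\ qZ M' v <= T ^ 2 * qZ M v.

Lemma stab v : partb v -> ~ In v [e; zopp e; f; zopp f] -> Rmax (qZ M' e) (qZ M' f) < qZ M' v.
Proof.
  intros Hp Hn. destruct (decomp e f v Hbasis) as [a [b ->]].
  destruct (partb_coef a b e f Hbasis Hp) as [C1 [C2 _]].
  assert (Ha : a <> 0%Z).
  { intro Ha0. destruct (C1 Ha0) as [Hb|Hb]; subst; apply Hn; destruct e, f; unfold zadd, zmul, zopp; cbn [In fst snd];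
    [do 2 right; left|do 3 right; left]; f_equal; lia. }
  assert (Hb : b <> 0%Z).
  { intro Hb0. destruct (C2 Hb0) as [Ha'|Ha']; subst; apply Hn; destruct e, f; unfold zadd, zmul, zopp; cbn [In fst snd];
    [left|right; left]; f_equal; lia. }
  assert (Ha1 : 1 <= IZR a * IZR a) by (rewrite <- mult_IZR; apply IZR_le; nia).
  assert (Hb1 : 1 <= IZR b * IZR b) by (rewrite <- mult_IZR; apply IZR_le; nia).
  assert (H4 : 4 * Rabs (bilZ M e f) <= Rmin (qZ M e) (qZ M f)).
  { apply Rmin_glb; apply (Rmult_le_compat_l 4) in HB; try lra;
    replace (4 * (1 / (4 * K))) with (1 / K) in HB by (field; lra); lra. }
  pose proof (Rmin_l (qZ M e) (qZ M f)). pose proof (Rmin_r (qZ M e) (qZ M f)).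
  pose proof (quad_coef_ineq (IZR a) (IZR b) (qZ M e) (qZ M f) (bilZ M e f) Ha1 Hb1 ltac:(lra) ltac:(lra)) as Hq.
  rewrite <- qZ_lin in Hq.
  pose proof (core_ineq K (qZ M e) (qZ M f) (bilZ M e f) T _ HK HE HF Hdet HB HT HT4 Hq) as Hc.
  set (v := zadd (zmul a e) (zmul b f)) in *.
  destruct (HMM v) as [Hv _]. destruct (HMM e) as [_ He']. destruct (HMM f) as [_ Hf'].
  assert (HT2 : 1 <= T ^ 2) by nra.
  assert (Hmx : Rmax (qZ M' e) (qZ M' f) <= T ^ 2 * Rmax (qZ M e) (qZ M f)).
  { apply Rmax_lub.
    - eapply Rle_trans; [exact He'|]. apply Rmult_le_compat_l; [lra|apply Rmax_l].
    - eapply Rle_trans; [exact Hf'|]. apply Rmult_le_compat_l; [lra|apply Rmax_r]. }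
  replace (T ^ 4) with (T ^ 2 * T ^ 2) in Hc by ring.
  assert (T ^ 2 * (T ^ 2 * Rmax (qZ M e) (qZ M f)) < T ^ 2 * qZ M' v) by nra.
  apply Rmult_lt_reg_l in H1; lra.
Qed.
End Stab.

Lemma zopp_inv v : zopp (zopp v) = v.
Proof. destruct v; unfold zopp; simpl; f_equal; lia. Qed.

Lemma basis_partb_l e f : is_basis e f -> partb e.
Proof. intros H; exists f; auto. Qed.
Lemma basis_partb_r e f : is_basis e f -> partb f.
Proof. intros H; exists e; auto. Qed.

Lemma zv_eq_dec (x y : zv) : {x = y} + {x <> y}.
Proof. decide equality; apply Z.eq_dec. Qed.

Lemma In4_dec (x a b c d : zv) : In x [a; b; c; d] \/ ~ In x [a; b; c; d].
Proof. destruct (In_dec zv_eq_dec x [a;b;c;d]); auto. Qed.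

Ltac zsplit := repeat match goal with
  | v : zv |- _ => let a := fresh "a" in let b := fresh "b" in destruct v as [a b]
  end; unfold zopp, zadd, zmul, is_basis in *; cbn [fst snd] in *.

Lemma nb_mul u k : ~ is_basis u (zmul k u).
Proof. destruct u as [a b]; unfold is_basis, zmul; cbn [fst snd].
  replace (a * (k * b) - b * (k * a))%Z with 0%Z by ring. lia. Qed.
Lemma nb_mul' u k : ~ is_basis (zmul k u) u.
Proof. destruct u as [a b]; unfold is_basis, zmul; cbn [fst snd].
  replace (k * a * b - k * b * a)%Z with 0%Z by ring. lia. Qed.
Lemma zopp_mul u : zopp u = zmul (-1) u.
Proof. destruct u; unfold zopp, zmul; cbn [fst snd]; f_equal; lia. Qed.
Lemma zid_mul u : u = zmul 1 u.
Proof. destruct u as [a b]; unfold zmul; cbn [fst snd]; f_equal; lia. Qed.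
Lemma nb1 u : ~ is_basis u u.
Proof. rewrite (zid_mul u) at 2. apply nb_mul. Qed.
Lemma nb2 u : ~ is_basis u (zopp u).
Proof. rewrite zopp_mul. apply nb_mul. Qed.
Lemma nb3 u : ~ is_basis (zopp u) u.
Proof. rewrite zopp_mul. apply nb_mul'. Qed.
Lemma nb4 u : ~ is_basis (zopp u) (zopp u).
Proof. apply nb1. Qed.
Lemma nbs u v : u = v \/ u = zopp v \/ zopp u = v \/ zopp u = zopp v -> ~ is_basis u v.
Proof. intros [->|[->|[<-|H]]]. apply nb1. apply nb3. apply nb2. 
  assert (u = v) by (rewrite <- (zopp_inv u), H, zopp_inv; auto). subst; apply nb1. Qed.

Section Mem.
Variables (M M' : sym2) (K T : R) (e f : zv).
Hypothesis Hbasis : is_basis e f.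
Hypothesis HK : 0 < K.
Hypothesis HE : 1 / K <= qZ M e.
Hypothesis HF : 1 / K <= qZ M f.
Hypothesis Hdet : qZ M e * qZ M f - bilZ M e f * bilZ M e f = 1.
Hypothesis HB : Rabs (bilZ M e f) <= 1 / (4 * K).
Hypothesis HT : 1 <= T.
Hypothesis HT4 : T ^ 4 <= 1 + Rinv (3 * K ^ 2).
Hypothesis HMM : forall v, qZ M v <= T ^ 2 * qZ M' v /\ qZ M' v <= T ^ 2 * qZ M v.
Hypothesis Hnn : forall v, 0 <= qZ M' v.

Let st := stab M M' K T e f Hbasis HK HE HF Hdet HB HT HT4 HMM.

Lemma normM_le_q v w : normM M' v <= normM M' w -> qZ M' v <= qZ M' w.
Proof. intros H. apply sqrt_le_0; auto. Qed.

Lemma mem_reduced e' f' : reduced_basis M' (e', f') ->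
  forall x, In x [e; zopp e; f; zopp f] -> In x [e'; zopp e'; f'; zopp f'].
Proof.
  intros [Hb' [H1 H2]].
  destruct (basis_nonzero e f Hbasis) as [He0 Hf0].
  assert (Ein : In e' [e; zopp e; f; zopp f]).
  { destruct (In4_dec e' e (zopp e) f (zopp f)) as [|Hn]; auto. exfalso.
    pose proof (st e' (basis_partb_l _ _ Hb') Hn). pose proof (normM_le_q _ _ (H1 e He0)).
    pose proof (Rmax_l (qZ M' e) (qZ M' f)). lra. }
  assert (Fin : In f' [e; zopp e; f; zopp f]).
  { destruct (In4_dec f' e (zopp e) f (zopp f)) as [|Hn]; auto. exfalso.
    pose proof (st f' (basis_partb_r _ _ Hb') Hn).
    pose proof (Rmax_l (qZ M' e) (qZ M' f)). pose proof (Rmax_r (qZ M' e) (qZ M' f)).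
    cbn [In] in Ein. destruct Ein as [E|[E|[E|[E|[]]]]]; subst e'.
    - assert (Hf : forall k, f <> zmul k e) by (intros k Hk; pose proof Hbasis as Hb0; rewrite Hk in Hb0; eapply nb_mul; eauto).
      pose proof (normM_le_q _ _ (H2 f Hf)). lra.
    - assert (Hf : forall k, f <> zmul k (zopp e)).
      { intros k Hk. pose proof Hbasis as Hb0. rewrite Hk, zopp_mul in Hb0. apply (nb_mul e (k * -1)).
        destruct e; unfold zmul in *; cbn [fst snd] in *. replace (k * -1 * z)%Z with (k * (-1 * z))%Z by ring.
        replace (k * -1 * z0)%Z with (k * (-1 * z0))%Z by ring. auto. }
      pose proof (normM_le_q _ _ (H2 f Hf)). lra.
    - assert (Hf : forall k, e <> zmul k f) by (intros k Hk; pose proof Hbasis as Hb0; rewrite Hk in Hb0; eapply nb_mul'; eauto).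
      pose proof (normM_le_q _ _ (H2 e Hf)). lra.
    - assert (Hf : forall k, e <> zmul k (zopp f)).
      { intros k Hk. pose proof Hbasis as Hb0. rewrite Hk, zopp_mul in Hb0. apply (nb_mul' f (k * -1)).
        destruct f; unfold zmul in *; cbn [fst snd] in *. replace (k * -1 * z)%Z with (k * (-1 * z))%Z by ring.
        replace (k * -1 * z0)%Z with (k * (-1 * z0))%Z by ring. auto. }
      pose proof (normM_le_q _ _ (H2 e Hf)). lra. }
  intros x Hx. clear H1 H2 st HMM Hnn HE HF Hdet HB.
  cbn [In] in Ein, Fin, Hx |- *.
  destruct Ein as [E|[E|[E|[E|[]]]]]; destruct Fin as [F|[F|[F|[F|[]]]]]; subst e' f';
  destruct Hx as [X|[X|[X|[X|[]]]]]; subst x; rewrite ?zopp_inv; try tauto;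
  exfalso; refine (nbs _ _ _ Hb'); rewrite ?zopp_inv; tauto.
Qed.
End Mem.

Lemma sb_e0 e0 e1 e2 : zadd e0 (zadd e1 e2) = (0%Z, 0%Z) -> e0 = zopp (zadd e1 e2).
Proof. destruct e0, e1, e2; unfold zadd, zopp; cbn [fst snd]; intro H; inversion H; f_equal; lia. Qed.

Lemma sb_basis0 e0 e1 e2 : e0 = zopp (zadd e1 e2) -> is_basis e1 e2 -> is_basis e0 e1.
Proof. intros ->. destruct e1, e2; unfold is_basis, zadd, zopp; cbn [fst snd]. intros [H|H]; [left|right]; nia. Qed.

Lemma selling m e0 e1 e2 v : obtuse_superbase m (e0, e1, e2) -> partb v ->
  ~ In v [e0; zopp e0; e1; zopp e1; e2; zopp e2] ->
  qZ m e0 <= qZ m v /\ qZ m e1 <= qZ m v /\ qZ m e2 <= qZ m v.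
Proof.
  intros [Hs [Hb [H01 [H12 H02]]]] Hp Hn.
  pose proof (sb_e0 _ _ _ Hs) as He0.
  destruct (decomp e1 e2 v Hb) as [a [b ->]].
  destruct (partb_coef a b e1 e2 Hb Hp) as [C1 [C2 C3]].
  assert (Ha : a <> 0%Z).
  { intro Ha0. destruct (C1 Ha0) as [Hb'|Hb']; subst; apply Hn; destruct e1, e2; unfold zadd, zmul, zopp; cbn [In fst snd];
    [do 4 right; left|do 5 right; left]; f_equal; lia. }
  assert (Hb0 : b <> 0%Z).
  { intro Hb0. destruct (C2 Hb0) as [Ha'|Ha']; subst; apply Hn; destruct e1, e2; unfold zadd, zmul, zopp; cbn [In fst snd];
    [do 2 right; left|do 3 right; left]; f_equal; lia. }
  assert (Hab : a <> b).
  { intro Hab. destruct (C3 Hab) as [Ha'|Ha']; subst; apply Hn; destruct e1, e2; unfold zadd, zmul, zopp; cbn [In fst snd];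
    [right; left|left]; f_equal; lia. }
  assert (Ha1 : 1 <= IZR a * IZR a) by (rewrite <- mult_IZR; apply IZR_le; nia).
  assert (Hb1 : 1 <= IZR b * IZR b) by (rewrite <- mult_IZR; apply IZR_le; nia).
  assert (Hab1 : 1 <= (IZR a - IZR b) * (IZR a - IZR b)) by (rewrite <- minus_IZR, <- mult_IZR; apply IZR_le; nia).
  rewrite qZ_lin.
  set (q1 := qZ m e1) in *. set (q2 := qZ m e2) in *. set (B := bilZ m e1 e2) in *.
  assert (E01 : bilZ m e0 e1 = - q1 - B).
  { rewrite He0, bilZ_opp_l, bilZ_add_l. unfold q1, B, qZ. rewrite (bilZ_sym m e2 e1). ring. }
  assert (E02 : bilZ m e0 e2 = - B - q2).
  { rewrite He0, bilZ_opp_l, bilZ_add_l. unfold q2, B, qZ. ring. }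
  assert (E00 : qZ m e0 = q1 + 2 * B + q2).
  { rewrite He0, qZ_opp. unfold q1, q2, B. clear. destruct e1, e2; unfold qZ, bilZ, bilR, zadd; cbn [fst snd].
    rewrite !plus_IZR. ring. }
  rewrite E00. set (s01 := q1 + B). set (s02 := q2 + B).
  assert (0 <= s01) by (unfold s01; lra). assert (0 <= s02) by (unfold s02; lra). assert (0 <= - B) by lra.
  replace (IZR a * IZR a * q1 + 2 * IZR a * IZR b * B + IZR b * IZR b * q2) with
    (IZR a * IZR a * s01 + IZR b * IZR b * s02 + (IZR a - IZR b) * (IZR a - IZR b) * (- B)) by (unfold s01, s02; ring).
  assert (s01 <= IZR a * IZR a * s01) by nra. assert (s02 <= IZR b * IZR b * s02) by nra.
  assert (- B <= (IZR a - IZR b) * (IZR a - IZR b) * (- B)) by nra.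
  unfold s01, s02 in *. repeat split; lra.
Qed.

Lemma In6_dec (x a b c d g h : zv) : In x [a; b; c; d; g; h] \/ ~ In x [a; b; c; d; g; h].
Proof. destruct (In_dec zv_eq_dec x [a;b;c;d;g;h]); auto. Qed.

Lemma V_closed e0 e1 e2 x : In x [e0; zopp e0; e1; zopp e1; e2; zopp e2] -> In (zopp x) [e0; zopp e0; e1; zopp e1; e2; zopp e2].
Proof. cbn [In]. intros [H|[H|[H|[H|[H|[H|[]]]]]]]; subst; rewrite ?zopp_inv; tauto. Qed.

Lemma coords e f v : In v [e; zopp e; f; zopp f] -> exists a b, v = zadd (zmul a e) (zmul b f) /\
  ((a = 1 /\ b = 0) \/ (a = -1 /\ b = 0) \/ (a = 0 /\ b = 1) \/ (a = 0 /\ b = -1))%Z.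
Proof.
  cbn [In]. intros [<-|[<-|[<-|[<-|[]]]]];
  [exists 1%Z, 0%Z|exists (-1)%Z, 0%Z|exists 0%Z, 1%Z|exists 0%Z, (-1)%Z]; (split; [|lia]);
  destruct e, f; unfold zadd, zmul, zopp; cbn [fst snd]; f_equal; ring.
Qed.

Lemma zdet_lin a b c d e f : zdet (zadd (zmul a e) (zmul b f)) (zadd (zmul c e) (zmul d f)) = ((a * d - b * c) * zdet e f)%Z.
Proof. destruct e, f; unfold zdet, zadd, zmul; cbn [fst snd]; ring. Qed.

Lemma coord_uniq e f a b c d : is_basis e f -> zadd (zmul a e) (zmul b f) = zadd (zmul c e) (zmul d f) -> a = c /\ b = d.
Proof.
  intros Hb H. destruct e as [e1 e2], f as [f1 f2]. unfold is_basis in Hb.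
  unfold zadd, zmul, zdet in *; cbn [fst snd] in *. inversion H as [[H1 H2]].
  assert (X : ((a - c) * (e1 * f2 - e2 * f1) = 0)%Z).
  { transitivity ((a * e1 + b * f1) * f2 - (a * e2 + b * f2) * f1 - ((c * e1 + d * f1) * f2 - (c * e2 + d * f2) * f1))%Z; [ring|].
    rewrite H1, H2. ring. }
  assert (Y : ((b - d) * (e1 * f2 - e2 * f1) = 0)%Z).
  { transitivity (e1 * (a * e2 + b * f2) - e2 * (a * e1 + b * f1) - (e1 * (c * e2 + d * f2) - e2 * (c * e1 + d * f1)))%Z; [ring|].
    rewrite H1, H2. ring. }
  apply Z.mul_eq_0 in X. apply Z.mul_eq_0 in Y. lia.
Qed.

Lemma no_triple e f x y z : is_basis e f -> In x [e; zopp e; f; zopp f] -> In y [e; zopp e; f; zopp f] ->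
  In z [e; zopp e; f; zopp f] -> is_basis x y -> z = zopp (zadd x y) -> False.
Proof.
  intros Hb Ix Iy Iz Hxy Hz.
  destruct (coords _ _ _ Ix) as [a1 [b1 [-> C1]]].
  destruct (coords _ _ _ Iy) as [a2 [b2 [-> C2]]].
  destruct (coords _ _ _ Iz) as [a3 [b3 [-> C3]]].
  pose proof (proj1 (is_basis_det _ _) Hxy) as Hxy'. clear Hxy. rename Hxy' into Hxy. rewrite zdet_lin in Hxy.
  pose proof (proj1 (is_basis_det _ _) Hb) as Hb'.
  assert (Hz' : zadd (zmul a3 e) (zmul b3 f) = zadd (zmul (- a1 - a2) e) (zmul (- b1 - b2) f)).
  { rewrite Hz. destruct e, f; unfold zadd, zmul, zopp; cbn [fst snd]; f_equal; ring. }
  apply coord_uniq in Hz'; auto.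
  assert (Hd : (a1 * b2 - b1 * a2 = 1 \/ a1 * b2 - b1 * a2 = -1)%Z).
  { destruct Hb' as [Hb''|Hb'']; rewrite Hb'' in Hxy; lia. }
  destruct Hz' as [Ha3 Hb3].
  destruct C1 as [[-> ->]|[[-> ->]|[[-> ->]|[-> ->]]]];
  destruct C2 as [[-> ->]|[[-> ->]|[[-> ->]|[-> ->]]]];
  destruct C3 as [[-> ->]|[[-> ->]|[[-> ->]|[-> ->]]]]; lia.
Qed.

Section Mem2.
Variables (M M' : sym2) (K T : R) (e f : zv).
Hypothesis Hbasis : is_basis e f.
Hypothesis HK : 0 < K.
Hypothesis HE : 1 / K <= qZ M e.
Hypothesis HF : 1 / K <= qZ M f.
Hypothesis Hdet : qZ M e * qZ M f - bilZ M e f * bilZ M e f = 1.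
Hypothesis HB : Rabs (bilZ M e f) <= 1 / (4 * K).
Hypothesis HT : 1 <= T.
Hypothesis HT4 : T ^ 4 <= 1 + Rinv (3 * K ^ 2).
Hypothesis HMM : forall v, qZ M v <= T ^ 2 * qZ M' v /\ qZ M' v <= T ^ 2 * qZ M v.

Let st := stab M M' K T e f Hbasis HK HE HF Hdet HB HT HT4 HMM.

Lemma mem_superbase e0 e1 e2 : obtuse_superbase M' (e0, e1, e2) ->
  forall x, In x [e; zopp e; f; zopp f] -> In x [e0; zopp e0; e1; zopp e1; e2; zopp e2].
Proof.
  intros Hsb.
  pose proof Hsb as Hsb'. unfold obtuse_superbase in Hsb'. destruct Hsb' as [Hs [Hb12 _]].
  pose proof (sb_e0 _ _ _ Hs) as He0.
  assert (Hb01 : is_basis e0 e1) by (apply sb_basis0 with e2; auto).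
  assert (Key : forall x, In x [e; f] -> In x [e0; zopp e0; e1; zopp e1; e2; zopp e2]).
  { intros x Hx. destruct (In6_dec x e0 (zopp e0) e1 (zopp e1) e2 (zopp e2)) as [|Hn]; auto. exfalso.
    assert (Hpx : partb x) by (cbn [In] in Hx; destruct Hx as [<-|[<-|[]]]; [eapply basis_partb_l|eapply basis_partb_r]; eauto).
    destruct (selling _ _ _ _ x Hsb Hpx Hn) as [S0 [S1 S2]].
    assert (Hxm : qZ M' x <= Rmax (qZ M' e) (qZ M' f)).
    { cbn [In] in Hx; destruct Hx as [<-|[<-|[]]]; [apply Rmax_l|apply Rmax_r]. }
    assert (Ink : forall y, partb y -> qZ M' y <= qZ M' x -> In y [e; zopp e; f; zopp f]).
    { intros y Hy Hq. destruct (In4_dec y e (zopp e) f (zopp f)) as [|Hn']; auto.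
      pose proof (st y Hy Hn'). lra. }
    pose proof (Ink e0 (basis_partb_l _ _ Hb01) S0) as I0.
    pose proof (Ink e1 (basis_partb_l _ _ Hb12) S1) as I1.
    pose proof (Ink e2 (basis_partb_r _ _ Hb12) S2) as I2.
    exact (no_triple e f e1 e2 e0 Hbasis I1 I2 I0 Hb12 He0). }
  intros x Hx. cbn [In] in Hx. destruct Hx as [<-|[<-|[<-|[<-|[]]]]].
  - apply Key; cbn; auto.
  - apply V_closed, Key; cbn; auto.
  - apply Key; cbn; auto.
  - apply V_closed, Key; cbn; auto.
Qed.
End Mem2.

Definition lsum {A} (l : list A) (g : A -> R) : R := fold_right Rplus 0 (map g l).

Lemma lsum_nil {A} (g : A -> R) : lsum [] g = 0.
Proof. reflexivity. Qed.
Lemma lsum_cons {A} (x : A) l g : lsum (x :: l) g = g x + lsum l g.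
Proof. reflexivity. Qed.
Lemma lsum_app {A} (l1 l2 : list A) g : lsum (l1 ++ l2) g = lsum l1 g + lsum l2 g.
Proof. induction l1; simpl; [unfold lsum; simpl; ring|]. unfold lsum in *; simpl. rewrite IHl1. ring. Qed.
Lemma lsum_le {A} (l : list A) g1 g2 : (forall x, In x l -> g1 x <= g2 x) -> lsum l g1 <= lsum l g2.
Proof.
  induction l; intros H; [unfold lsum; simpl; lra|]. rewrite !lsum_cons.
  pose proof (H a (or_introl eq_refl)). assert (lsum l g1 <= lsum l g2) by (apply IHl; intros; apply H; right; auto). lra.
Qed.
Lemma lsum_nonneg {A} (l : list A) g : (forall x, In x l -> 0 <= g x) -> 0 <= lsum l g.
Proof.
  intros H. replace 0 with (lsum l (fun _ => 0)) at 1.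
  - apply lsum_le; auto.
  - induction l; auto. rewrite lsum_cons, IHl; [ring|]. intros; apply H; right; auto.
Qed.
Lemma lsum_plus {A} (l : list A) g1 g2 : lsum l (fun x => g1 x + g2 x) = lsum l g1 + lsum l g2.
Proof. induction l; [unfold lsum; simpl; ring|]. rewrite !lsum_cons, IHl. ring. Qed.
Lemma lsum_scal {A} (l : list A) c g : lsum l (fun x => c * g x) = c * lsum l g.
Proof. induction l; [unfold lsum; simpl; ring|]. rewrite !lsum_cons, IHl. ring. Qed.
Lemma lsum_ext {A} (l : list A) g1 g2 : (forall x, In x l -> g1 x = g2 x) -> lsum l g1 = lsum l g2.
Proof.
  induction l; intros H; auto. rewrite !lsum_cons. rewrite H by (left; auto). rewrite IHl; auto.
  intros; apply H; right; auto.
Qed.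
Lemma lsum_map {A B} (l : list A) (f : A -> B) g : lsum (map f l) g = lsum l (fun x => g (f x)).
Proof. induction l; auto. simpl. rewrite !lsum_cons, IHl. reflexivity. Qed.

Lemma lsum_prod {A B} (l1 : list A) (l2 : list B) (g : A -> B -> R) :
  lsum l1 (fun a => lsum l2 (fun b => g a b)) = lsum (list_prod l1 l2) (fun p => g (fst p) (snd p)).
Proof.
  induction l1; auto. simpl. rewrite lsum_cons, lsum_app, IHl1, lsum_map. reflexivity.
Qed.

Lemma lsum_filter {A} (l : list A) (P : A -> bool) g :
  lsum l (fun x => if P x then g x else 0) = lsum (filter P l) g.
Proof. induction l; auto. cbn [filter]. rewrite lsum_cons. destruct (P a); rewrite ?lsum_cons, IHl; ring. Qed.

Lemma lsum_one {A} (l : list A) g y : In y l -> (forall z, In z l -> 0 <= g z) -> g y <= lsum l g.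
Proof.
  induction l as [|a l IH]; intros Hy Hg; [destruct Hy|]. rewrite lsum_cons.
  assert (Hg' : forall z, In z l -> 0 <= g z) by (intros; apply Hg; right; auto).
  pose proof (lsum_nonneg l g Hg'). pose proof (Hg a (or_introl eq_refl)).
  destruct Hy as [<-|Hy]; [lra|]. pose proof (IH Hy Hg'). lra.
Qed.

Lemma lsum_two {A} (l : list A) g x y : x <> y -> In x l -> In y l -> (forall z, In z l -> 0 <= g z) ->
  g x + g y <= lsum l g.
Proof.
  induction l as [|a l IH]; intros Hxy Hx Hy Hg; [destruct Hx|]. rewrite lsum_cons.
  assert (Hg' : forall z, In z l -> 0 <= g z) by (intros; apply Hg; right; auto).
  pose proof (lsum_nonneg l g Hg').
  destruct Hx as [<-|Hx]; destruct Hy as [<-|Hy].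
  - congruence.
  - pose proof (lsum_one l g y Hy Hg'). lra.
  - pose proof (lsum_one l g x Hx Hg'). lra.
  - pose proof (IH Hxy Hx Hy Hg'). pose proof (Hg a (or_introl eq_refl)). lra.
Qed.

Section Inj.
Variables (A B : Type) (decB : forall x y : B, {x = y} + {x <> y}).

Lemma lsum_remove (l : list B) g y : In y l -> (forall z, In z l -> 0 <= g z) ->
  g y + lsum (remove decB y l) g <= lsum l g.
Proof.
  induction l as [|a l IH]; intros Hy Hg; [destruct Hy|]. simpl. rewrite lsum_cons.
  assert (Hg' : forall z, In z l -> 0 <= g z) by (intros; apply Hg; right; auto).
  destruct (decB y a) as [->|Hne].
  - destruct (In_dec decB a l) as [Hin|Hnin].
    + pose proof (IH Hin Hg'). pose proof (Hg a (or_introl eq_refl)). lra.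
    + rewrite notin_remove by auto. lra.
  - rewrite lsum_cons. destruct Hy as [->|Hy]; [congruence|]. pose proof (IH Hy Hg'). lra.
Qed.

Lemma lsum_incl (m l : list B) g : NoDup m -> incl m l -> (forall z, In z l -> 0 <= g z) -> lsum m g <= lsum l g.
Proof.
  revert l. induction m as [|y m IH]; intros l Hnd Hinc Hg.
  - rewrite lsum_nil. apply lsum_nonneg; auto.
  - rewrite lsum_cons. inversion Hnd; subst.
    assert (Hy : In y l) by (apply Hinc; left; auto).
    assert (incl m (remove decB y l)).
    { intros z Hz. apply in_in_remove. intro; subst; auto. apply Hinc; right; auto. }
    assert (lsum m g <= lsum (remove decB y l) g).
    { apply IH; auto. intros z Hz. apply Hg. eapply in_remove; eauto. }
    pose proof (lsum_remove l g y Hy Hg). lra.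
Qed.

Lemma NoDup_map_inj (l : list A) (phi : A -> B) : NoDup l ->
  (forall x y, In x l -> In y l -> phi x = phi y -> x = y) -> NoDup (map phi l).
Proof.
  induction l as [|a l IH]; intros Hnd Hinj; simpl; [constructor|]. inversion Hnd; subst. constructor.
  - intros Hin. apply in_map_iff in Hin. destruct Hin as [x [Hx Hxl]].
    assert (x = a) by (apply Hinj; [right; auto|left; auto|auto]). subst; contradiction.
  - apply IH; auto. intros; apply Hinj; auto; right; auto.
Qed.

Lemma lsum_inj (l1 : list A) (l2 : list B) (phi : A -> B) g : NoDup l1 ->
  (forall x, In x l1 -> In (phi x) l2) -> (forall x y, In x l1 -> In y l1 -> phi x = phi y -> x = y) ->
  (forall z, In z l2 -> 0 <= g z) -> lsum l1 (fun x => g (phi x)) <= lsum l2 g.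
Proof.
  intros Hnd Hin Hinj Hg. rewrite <- lsum_map. apply lsum_incl; auto.
  - apply NoDup_map_inj; auto.
  - intros z Hz. apply in_map_iff in Hz. destruct Hz as [x [<- Hx]]. auto.
Qed.
End Inj.

Definition Gt (n : nat) (u : Z -> Z -> R) (p : Z * Z) (g : zv) : R :=
  (uper n u (fst p + fst g) (snd p + snd g) - uper n u (fst p) (snd p)) ^ 2.
Definition zp (p : nat * nat) : Z * Z := (Z.of_nat (fst p), Z.of_nat (snd p)).
Definition red (n : nat) (q : Z * Z) : nat * nat :=
  (Z.to_nat (fst q mod Z.of_nat n), Z.to_nat (snd q mod Z.of_nat n)).
Definition grid (n : nat) := list_prod (seq 0 n) (seq 0 n).

Lemma energy_eq n St u : energy n St u =
  lsum (grid n) (fun p => lsum (St (INR (fst p) * / INR n) (INR (snd p) * / INR n)) (Gt n u (zp p))).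
Proof.
  transitivity (lsum (seq 0 n) (fun i => lsum (seq 0 n) (fun j =>
     lsum (St (INR i * / INR n) (INR j * / INR n)) (Gt n u (zp (i, j)))))); [reflexivity|].
  unfold grid. rewrite (lsum_prod (seq 0 n) (seq 0 n) (fun i j => lsum (St (INR i * / INR n) (INR j * / INR n)) (Gt n u (zp (i, j))))).
  apply lsum_ext. intros [i j] _. reflexivity.
Qed.

Lemma Gt_nonneg n u p g : 0 <= Gt n u p g.
Proof. unfold Gt. apply pow2_ge_0. Qed.

Lemma red_zp n q : (1 <= n)%nat -> zp (red n q) = (fst q mod Z.of_nat n, snd q mod Z.of_nat n)%Z.
Proof.
  intros Hn. unfold zp, red; simpl. f_equal; apply Z2Nat.id; apply Z.mod_pos_bound; lia.
Qed.

Lemma Gt_red n u q g : (1 <= n)%nat -> Gt n u q g = Gt n u (zp (red n q)) g.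
Proof.
  intros Hn. rewrite red_zp by auto. unfold Gt, uper; simpl.
  rewrite !Z.mod_mod by lia.
  rewrite (Zplus_mod (fst q mod Z.of_nat n)), (Zplus_mod (snd q mod Z.of_nat n)), !Z.mod_mod by lia.
  rewrite <- (Zplus_mod (fst q)), <- (Zplus_mod (snd q)). reflexivity.
Qed.

Lemma sq_split x y z : (x - z) ^ 2 <= 2 * (x - y) ^ 2 + 2 * (y - z) ^ 2.
Proof. pose proof (pow2_ge_0 (x - 2 * y + z)). nra. Qed.

Lemma Gt_split n u p a b : Gt n u p (zadd a b) <= 2 * Gt n u (zadd p a) b + 2 * Gt n u p a.
Proof.
  unfold Gt, zadd; cbn [fst snd]. rewrite !Z.add_assoc. apply sq_split.
Qed.

Lemma Gt_split' n u p a b : Gt n u p (zopp (zadd a b)) <= 2 * Gt n u (zadd p (zopp a)) (zopp b) + 2 * Gt n u p (zopp a).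
Proof.
  replace (zopp (zadd a b)) with (zadd (zopp a) (zopp b)) by (destruct a, b; unfold zopp, zadd; cbn [fst snd]; f_equal; lia).
  apply Gt_split.
Qed.

Lemma NoDup_prod {A B} (l1 : list A) (l2 : list B) : NoDup l1 -> NoDup l2 -> NoDup (list_prod l1 l2).
Proof.
  induction l1 as [|a l1 IH]; intros H1 H2; simpl; [constructor|]. inversion H1; subst.
  apply NoDup_app; auto.
  - apply NoDup_map_inj; auto. intros x y _ _ Hxy. inversion Hxy; auto.
  - intros [x y] Hx Hy. apply in_map_iff in Hx. destruct Hx as [b [Hb _]]. inversion Hb; subst.
    apply in_prod_iff in Hy. destruct Hy; auto.
Qed.

Lemma NoDup_grid n : NoDup (grid n).
Proof. unfold grid. apply NoDup_prod; apply seq_NoDup. Qed.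

Lemma in_grid n p : In p (grid n) <-> (fst p < n /\ snd p < n)%nat.
Proof.
  destruct p as [i j]. unfold grid. rewrite in_prod_iff, !in_seq. simpl. lia.
Qed.

Lemma red_in n q : (1 <= n)%nat -> In (red n q) (grid n).
Proof.
  intros Hn. apply in_grid. unfold red; simpl.
  pose proof (Z.mod_pos_bound (fst q) (Z.of_nat n) ltac:(lia)).
  pose proof (Z.mod_pos_bound (snd q) (Z.of_nat n) ltac:(lia)). lia.
Qed.

Lemma red_inj n p p' a : (1 <= n)%nat -> In p (grid n) -> In p' (grid n) ->
  red n (zadd (zp p) a) = red n (zadd (zp p') a) -> p = p'.
Proof.
  intros Hn Hp Hp' H. apply in_grid in Hp. apply in_grid in Hp'.
  destruct p as [i j], p' as [i' j']; unfold red, zadd, zp in H; cbn [fst snd] in *.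
  inversion H as [[H1 H2]].
  apply Z2Nat.inj in H1; try (apply Z.mod_pos_bound; lia).
  apply Z2Nat.inj in H2; try (apply Z.mod_pos_bound; lia).
  assert (E1 : ((Z.of_nat i + fst a - fst a) mod Z.of_nat n = (Z.of_nat i' + fst a - fst a) mod Z.of_nat n)%Z).
  { rewrite Zminus_mod, H1, <- Zminus_mod. reflexivity. }
  assert (E2 : ((Z.of_nat j + snd a - snd a) mod Z.of_nat n = (Z.of_nat j' + snd a - snd a) mod Z.of_nat n)%Z).
  { rewrite Zminus_mod, H2, <- Zminus_mod. reflexivity. }
  replace (Z.of_nat i + fst a - fst a)%Z with (Z.of_nat i) in E1 by ring.
  replace (Z.of_nat i' + fst a - fst a)%Z with (Z.of_nat i') in E1 by ring.
  replace (Z.of_nat j + snd a - snd a)%Z with (Z.of_nat j) in E2 by ring.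
  replace (Z.of_nat j' + snd a - snd a)%Z with (Z.of_nat j') in E2 by ring.
  rewrite !Z.mod_small in E1, E2 by lia. f_equal; lia.
Qed.

Lemma det_Mof m : spd m -> det2 (Mm m) = 1.
Proof.
  intros Hm. destruct (spd_pos m Hm) as [Ha [Hd Hc]].
  unfold Mm, det2, scale2, inv2; simpl. unfold det2 in *.
  set (d := ma m * mc m - mb m * mb m) in *.
  assert (Hs : sqrt d * sqrt d = d) by (apply sqrt_sqrt; lra).
  transitivity ((sqrt d * sqrt d) * (ma m * mc m - mb m * mb m) / (d * d)); [field; lra|]. fold d. rewrite Hs. field. lra.
Qed.

Lemma qZ_det m e f : qZ m e * qZ m f - bilZ m e f * bilZ m e f = det2 m * (IZR (zdet e f) * IZR (zdet e f)).
Proof. destruct e, f; unfold qZ, bilZ, bilR, zdet, det2; cbn [fst snd]. rewrite minus_IZR, !mult_IZR. ring. Qed.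

Lemma Rpower4 x : 0 < x -> Rpower x (/ 4) ^ 4 = x.
Proof.
  intros Hx. rewrite <- Rpower_pow by (unfold Rpower; apply exp_pos).
  rewrite Rpower_mult. replace (/ 4 * INR 4) with 1 by (simpl; field). apply Rpower_1; auto.
Qed.

Section Geo.
Variable D : field.
Hypothesis HDspd : forall x y, spd (D x y).
Hypothesis HDcont : field_continuous D.
Hypothesis HDper : field_periodic D.
Variable rb : R -> R -> zv * zv.
Hypothesis Hrb : forall x y, reduced_basis (Mof D x y) (rb x y).
Variable sb : R -> R -> zv * zv * zv.
Hypothesis Hsb : forall x y, obtuse_superbase (Mof D x y) (sb x y).
Variable n : nat.
Hypothesis Hn : (1 <= n)%nat.
Hypothesis Htau : tau_h D (/ INR n) <= Rpower (1 + / (3 * kappaB D ^ 2)) (/ 4).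

Definition Xc (i : nat) := INR i * / INR n.
Definition Mz (p : nat * nat) := Mof D (Xc (fst p)) (Xc (snd p)).
Definition rbz (p : nat * nat) := rb (Xc (fst p)) (Xc (snd p)).
Definition sbz (p : nat * nat) := sb (Xc (fst p)) (Xc (snd p)).
Definition Wz (p : nat * nat) := W_of D (Mz p) (rbz p) (sbz p).
Definition W'z (p : nat * nat) := W'_of D (Mz p) (rbz p) (sbz p).

Lemma n_pos : 0 < INR n.
Proof. apply lt_0_INR. lia. Qed.

Lemma IZR_red (z : Z) : INR (Z.to_nat (z mod Z.of_nat n)) * / INR n + IZR (z / Z.of_nat n) = IZR z * / INR n.
Proof.
  pose proof n_pos.
  rewrite INR_IZR_INZ, Z2Nat.id by (apply Z.mod_pos_bound; lia).
  rewrite (Z.div_mod z (Z.of_nat n)) at 3 by lia.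
  rewrite plus_IZR, mult_IZR, <- INR_IZR_INZ. field. lra.
Qed.

Lemma Mz_red q : Mz (red n q) = Mof D (IZR (fst q) * / INR n) (IZR (snd q) * / INR n).
Proof.
  unfold Mz, Xc, red, Mof; cbn [fst snd].
  rewrite <- (IZR_red (fst q)), <- (IZR_red (snd q)). rewrite per_Z; auto.
Qed.

Lemma tau_h_ge1 h : 0 <= h -> 1 <= tau_h D h.
Proof.
  intros Hh. destruct (tau_spec D HDspd HDcont HDper 0 0 0 0) as [[H1 _] _].
  eapply Rle_trans; [exact H1|]. unfold tau_h. apply sup_R_ub.
  - exists (Rmax 1 (kappaB D)). intros r [a [b [c [d [_ ->]]]]]. apply tau_spec; auto.
  - exists 0, 0, 0, 0. split; auto.
    replace ((0 - 0) ^ 2 + (0 - 0) ^ 2) with 0 by ring. rewrite sqrt_0.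
    pose proof (kappaB_pos D HDspd HDcont HDper). nra.
Qed.

Let K := kappaB D.
Let T := tau_h D (/ INR n).

Lemma KT_facts : 0 < K /\ 1 <= T /\ T ^ 4 <= 1 + Rinv (3 * K ^ 2).
Proof.
  pose proof (kappaB_pos D HDspd HDcont HDper) as HK. fold K in HK.
  assert (Hh : 0 <= / INR n) by (left; apply Rinv_0_lt_compat, n_pos).
  pose proof (tau_h_ge1 _ Hh) as HT. fold T in HT.
  split; auto. split; auto.
  assert (Hx : 0 < 1 + / (3 * K ^ 2)) by (assert (0 < / (3 * K ^ 2)) by (apply Rinv_0_lt_compat; nra); lra).
  rewrite <- (Rpower4 _ Hx). apply pow_incr. split; [lra|]. exact Htau.
Qed.

Lemma qZ_eq_qM x y v : qZ (Mof D x y) v = qM D x y (IZR (fst v)) (IZR (snd v)).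
Proof. reflexivity. Qed.

Lemma geo p e f (s : bool) : In p (grid n) -> mu_of (Mz p) (rbz p) <= theta0 D -> rbz p = (e, f) ->
  forall x, In x [e; zopp e; f; zopp f] ->
  In x (Wz (red n (zadd (zp p) (if s then e else zopp e)))).
Proof.
  intros Hp Hmu Hef.
  destruct KT_facts as [HK [HT HT4]].
  set (a := if s then e else zopp e).
  set (M := Mz p). set (w := red n (zadd (zp p) a)).
  pose proof (Hrb (Xc (fst p)) (Xc (snd p))) as Hr. fold (rbz p) in Hr. rewrite Hef in Hr.
  destruct Hr as [Hb [H1 H2]]. fold (Mz p) M in H1, H2.
  destruct (basis_nonzero e f Hb) as [He0 Hf0].
  assert (HqE : forall v, v <> (0%Z, 0%Z) -> 1 / K <= qZ M v).
  { intros v Hv. pose proof (zv_nonzero_sq v Hv). 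
    destruct (qM_bounds D HDspd HDcont HDper (Xc (fst p)) (Xc (snd p)) (IZR (fst v)) (IZR (snd v))) as [B1 _].
    fold K in B1. unfold M, Mz. rewrite qZ_eq_qM.
    apply (Rmult_le_reg_l K); auto. replace (K * (1 / K)) with 1 by (field; lra). lra. }
  pose proof (HqE e He0) as HE. pose proof (HqE f Hf0) as HF.
  assert (Hdet : qZ M e * qZ M f - bilZ M e f * bilZ M e f = 1).
  { rewrite qZ_det. unfold M, Mz, Mof. fold (Mm (D (Xc (fst p)) (Xc (snd p)))). rewrite det_Mof by auto.
    destruct (proj1 (is_basis_det _ _) Hb) as [Hb'|Hb']; rewrite Hb'; simpl; ring. }
  assert (HB : Rabs (bilZ M e f) <= 1 / (4 * K)).
  { unfold mu_of in Hmu. rewrite Hef in Hmu. simpl in Hmu. unfold theta0 in Hmu. fold K in Hmu. fold M in Hmu.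
    replace (1 / (4 * K)) with (/ (4 * K)) by (field; lra). exact Hmu. }
  assert (HEF : qZ M e <= qZ M f).
  { apply sqrt_le_0; try (pose proof (HqE e He0); pose proof (HqE f Hf0); assert (0 < 1 / K) by (apply Rdiv_lt_0_compat; lra); lra).
    apply H1; auto. }
  assert (Ha2 : IZR (fst a) * IZR (fst a) + IZR (snd a) * IZR (snd a) <= 4 * K * K).
  { assert (Hae : IZR (fst a) * IZR (fst a) + IZR (snd a) * IZR (snd a) = IZR (fst e) * IZR (fst e) + IZR (snd e) * IZR (snd e)).
    { unfold a; destruct s; auto. destruct e; unfold zopp; cbn [fst snd]. rewrite !opp_IZR. ring. }
    rewrite Hae.
    destruct (qM_bounds D HDspd HDcont HDper (Xc (fst p)) (Xc (snd p)) (IZR (fst e)) (IZR (snd e))) as [B1 _].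
    fold K in B1. rewrite <- qZ_eq_qM in B1. fold (Mz p) M in B1.
    set (E := qZ M e) in *. set (F := qZ M f) in *. set (B := bilZ M e f) in *.
    assert (HKE : 1 <= K * E) by (apply (Rmult_le_compat_l K) in HE; [|lra]; replace (K * (1 / K)) with 1 in HE by (field; lra); lra).
    assert (HKB : 4 * K * Rabs B <= 1) by (apply (Rmult_le_compat_l (4 * K)) in HB; [|lra]; replace (4 * K * (1 / (4 * K))) with 1 in HB by (field; lra); lra).
    assert (HBsq : B * B = Rabs B * Rabs B) by (unfold Rabs; destruct (Rcase_abs B); ring).
    assert (HE0 : 0 < E) by (assert (0 < 1 / K) by (apply Rdiv_lt_0_compat; lra); lra).
    assert (HEE : E * E <= E * F) by nra.
    assert (H16 : 16 * (K * K) * (E * E) <= 16 * (K * K) + 1).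
    { assert (16 * (K * K) * (B * B) <= 1).
      { rewrite HBsq. pose proof (Rabs_pos B). assert (0 <= 4 * K * Rabs B) by nra.
        replace (16 * (K * K) * (Rabs B * Rabs B)) with ((4 * K * Rabs B) * (4 * K * Rabs B)) by ring. nra. }
      nra. }
    assert (HK2 : 15 <= 16 * (K * K)) by nra.
    assert (E <= 4 * K) by nra.
    nra. }
  set (qx := IZR (fst (zadd (zp p) a)) * / INR n). set (qy := IZR (snd (zadd (zp p) a)) * / INR n).
  assert (HMw : Mz w = Mof D qx qy) by (unfold w; rewrite Mz_red; reflexivity).
  assert (Hh : 0 <= / INR n) by (left; apply Rinv_0_lt_compat, n_pos).
  assert (Hdist : sqrt ((Xc (fst p) - qx) ^ 2 + (Xc (snd p) - qy) ^ 2) <= 2 * kappaB D * / INR n).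
  { unfold qx, qy, Xc, zp, zadd; cbn [fst snd]. rewrite !plus_IZR, <- !INR_IZR_INZ.
    replace ((INR (fst p) * / INR n - (INR (fst p) + IZR (fst a)) * / INR n) ^ 2 +
             (INR (snd p) * / INR n - (INR (snd p) + IZR (snd a)) * / INR n) ^ 2)
      with ((IZR (fst a) * IZR (fst a) + IZR (snd a) * IZR (snd a)) * (/ INR n * / INR n)) by ring.
    rewrite sqrt_mult_alt by nra. rewrite sqrt_square by lra.
    apply Rmult_le_compat_r; auto. fold K.
    rewrite <- (sqrt_square (2 * K)) by lra. apply sqrt_le_1_alt. nra. }
  pose proof (tau_h_close D HDspd HDcont HDper _ _ _ _ _ Hh Hdist) as Hclose. fold T in Hclose.
  assert (HMM : forall v, qZ M v <= T ^ 2 * qZ (Mz w) v /\ qZ (Mz w) v <= T ^ 2 * qZ M v).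
  { intros v. rewrite HMw. apply Hclose. }
  assert (Hnn : forall v, 0 <= qZ (Mz w) v) by (intros v; rewrite HMw; apply qM_nonneg; auto).
  intros x Hx. unfold Wz, W_of.
  destruct (Rle_dec (mu_of (Mz w) (rbz w)) (theta0 D)) as [Hs|Hs].
  - pose proof (Hrb (Xc (fst w)) (Xc (snd w))) as Hrw. fold (rbz w) (Mz w) in Hrw.
    destruct (rbz w) as [e' f'].
    exact (mem_reduced M (Mz w) K T e f Hb HK HE HF Hdet HB HT HT4 HMM Hnn e' f' Hrw x Hx).
  - pose proof (Hsb (Xc (fst w)) (Xc (snd w))) as Hsw. fold (sbz w) (Mz w) in Hsw.
    destruct (sbz w) as [[e0 e1] e2].
    exact (mem_superbase M (Mz w) K T e f Hb HK HE HF Hdet HB HT HT4 HMM e0 e1 e2 Hsw x Hx).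
Qed.
End Geo.

Lemma lsum_flat_map {A B} (l : list A) (F : A -> list B) g :
  lsum (flat_map F l) g = lsum l (fun w => lsum (F w) g).
Proof. induction l; auto. simpl. rewrite lsum_app, lsum_cons, IHl. reflexivity. Qed.

Lemma lsum_const {A} (l : list A) c : lsum l (fun _ => c) = INR (length l) * c.
Proof. induction l; [unfold lsum; simpl; ring|]. rewrite lsum_cons, IHl. simpl length. rewrite S_INR. ring. Qed.

Definition sg (s : bool) (e : zv) := if s then e else zopp e.

Lemma sg_inj s s' e : e <> (0%Z, 0%Z) -> sg s e = sg s' e -> s = s'.
Proof.
  intros He H. destruct s, s'; auto; exfalso; apply He; destruct e; unfold sg, zopp in H; inversion H; f_equal; lia.
Qed.

Lemma pair_dec (x y : (nat * nat) * zv) : {x = y} + {x <> y}.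
Proof. decide equality; [apply zv_eq_dec|decide equality; apply Nat.eq_dec]. Qed.

Section Final.
Variable D : field.
Hypothesis HDspd : forall x y, spd (D x y).
Hypothesis HDcont : field_continuous D.
Hypothesis HDper : field_periodic D.
Variable rb : R -> R -> zv * zv.
Hypothesis Hrb : forall x y, reduced_basis (Mof D x y) (rb x y).
Variable sb : R -> R -> zv * zv * zv.
Hypothesis Hsb : forall x y, obtuse_superbase (Mof D x y) (sb x y).
Variable n : nat.
Hypothesis Hn : (1 <= n)%nat.
Hypothesis Htau : tau_h D (/ INR n) <= Rpower (1 + / (3 * kappaB D ^ 2)) (/ 4).
Variable u : Z -> Z -> R.

Definition small p := if Rle_dec (mu_of (Mz D n p) (rbz rb n p)) (theta0 D) then true else false.
Definition Fl p := lsum (Wz D rb sb n p) (Gt n u (zp p)).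
Definition F'l p := lsum (W'z D rb sb n p) (Gt n u (zp p)).
Definition Apair (x : (nat * nat) * bool) :=
  let (p, s) := x in let (e, f) := rbz rb n p in
  Gt n u (zp (red n (zadd (zp p) (sg s e)))) f + Gt n u (zp (red n (zadd (zp p) (sg s e)))) (zopp f).
Definition Aof p := if small p then Apair (p, true) + Apair (p, false) else 0.

Lemma Fl_nonneg p : 0 <= Fl p.
Proof. apply lsum_nonneg. intros; apply Gt_nonneg. Qed.

Lemma pointwise p : F'l p <= 5 * Fl p + 2 * Aof p.
Proof.
  unfold F'l, Fl, Aof, small, W'z, Wz, W'_of, W_of.
  destruct (Rle_dec (mu_of (Mz D n p) (rbz rb n p)) (theta0 D)) as [Hs|Hs].
  - unfold Apair. destruct (rbz rb n p) as [e f]. unfold sg.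
    rewrite !lsum_cons, lsum_nil.
    set (z := zp p).
    pose proof (Gt_split n u z e f) as A1.
    pose proof (Gt_split' n u z e f) as A2.
    pose proof (Gt_split n u z e (zopp f)) as A3.
    pose proof (Gt_split' n u z e (zopp f)) as A4. rewrite zopp_inv in A4.
    unfold zsub.
    rewrite <- !(Gt_red n u _ _ Hn).
    pose proof (Gt_nonneg n u z e). pose proof (Gt_nonneg n u z (zopp e)).
    pose proof (Gt_nonneg n u z f). pose proof (Gt_nonneg n u z (zopp f)). lra.
  - pose proof (lsum_nonneg (V_of (sbz sb n p)) (Gt n u (zp p)) (fun x _ => Gt_nonneg _ _ _ _)). lra.
Qed.

Definition phi (x : (nat * nat) * bool) : nat * nat :=
  let (p, s) := x in red n (zadd (zp p) (sg s (fst (rbz rb n p)))).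
Definition psi (x : (nat * nat) * bool) : (nat * nat) * zv :=
  let (p, s) := x in (phi x, sg s (fst (rbz rb n p))).
Definition L1 := filter (fun x => small (fst x)) (list_prod (grid n) [true; false]).
Definition L2 := flat_map (fun w => map (fun a => (w, a)) (Wz D rb sb n w)) (grid n).

Lemma L1_prop x : In x L1 -> In (fst x) (grid n) /\ small (fst x) = true.
Proof.
  unfold L1. intros H. apply filter_In in H. destruct H as [H1 H2]. split; auto.
  destruct x. apply in_prod_iff in H1. tauto.
Qed.

Lemma small_true p : small p = true -> mu_of (Mz D n p) (rbz rb n p) <= theta0 D.
Proof. unfold small. destruct Rle_dec; auto; discriminate. Qed.

Lemma Apair_le x : In x L1 -> Apair x <= Fl (phi x).
Proof.
  intros Hx. destruct (L1_prop x Hx) as [Hp Hs]. destruct x as [p s]. cbn [fst] in *.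
  apply small_true in Hs.
  pose proof (geo D HDspd HDcont HDper rb Hrb sb Hsb n Hn Htau p) as G.
  pose proof (Hrb (Xc n (fst p)) (Xc n (snd p))) as Hr. fold (rbz rb n p) in Hr.
  unfold Apair, phi. destruct (rbz rb n p) as [e f] eqn:Hef. cbn [fst].
  specialize (G e f s Hp Hs eq_refl).
  destruct Hr as [Hb _]. destruct (basis_nonzero e f Hb) as [_ Hf0].
  assert (Hdist : f <> zopp f).
  { intro H. apply Hf0. destruct f; unfold zopp in H; inversion H; f_equal; lia. }
  unfold Fl. apply lsum_two; auto.
  - apply G. cbn; tauto.
  - apply G. cbn; tauto.
  - intros; apply Gt_nonneg.
Qed.
Lemma psi_in x : In x L1 -> In (psi x) L2.
Proof.
  intros Hx. destruct (L1_prop x Hx) as [Hp Hs]. destruct x as [p s]. cbn [fst] in *.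
  apply small_true in Hs.
  pose proof (geo D HDspd HDcont HDper rb Hrb sb Hsb n Hn Htau p) as G.
  unfold L2. apply in_flat_map. exists (phi (p, s)). split; [apply red_in; auto|].
  apply in_map_iff. exists (sg s (fst (rbz rb n p))). split; [reflexivity|].
  unfold phi. destruct (rbz rb n p) as [e f] eqn:Hef. cbn [fst].
  apply (G e f s Hp Hs eq_refl). destruct s; cbn; tauto.
Qed.

Lemma psi_inj x y : In x L1 -> In y L1 -> psi x = psi y -> x = y.
Proof.
  intros Hx Hy H. destruct (L1_prop x Hx) as [Hp _]. destruct (L1_prop y Hy) as [Hp' _].
  destruct x as [p s], y as [p' s']. cbn [fst] in *. unfold psi in H. apply pair_equal_spec in H. destruct H as [H1 H2].
  unfold phi in H1. rewrite H2 in H1. apply red_inj in H1; auto. subst p'.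
  f_equal. pose proof (Hrb (Xc n (fst p)) (Xc n (snd p))) as Hr. fold (rbz rb n p) in Hr.
  destruct (rbz rb n p) as [e f]. destruct Hr as [Hb _]. destruct (basis_nonzero e f Hb) as [He0 _].
  cbn [fst] in H2. eapply sg_inj; eauto.
Qed.

Lemma Wz_len w : (length (Wz D rb sb n w) <= 6)%nat.
Proof.
  unfold Wz, W_of. destruct Rle_dec.
  - destruct (rbz rb n w); simpl; lia.
  - destruct (sbz sb n w) as [[a b] c]; simpl; lia.
Qed.

Lemma sumA_le : lsum (grid n) Aof <= 6 * lsum (grid n) Fl.
Proof.
  assert (E1 : lsum (grid n) Aof = lsum L1 Apair).
  { transitivity (lsum (grid n) (fun a => lsum [true; false] (fun b => if small a then Apair (a, b) else 0))).
    { apply lsum_ext. intros a _. unfold Aof. rewrite !lsum_cons, lsum_nil. destruct (small a); ring. }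
    rewrite (lsum_prod (grid n) [true; false] (fun a b => if small a then Apair (a, b) else 0)).
    unfold L1. rewrite <- lsum_filter. apply lsum_ext. intros [a b] _. reflexivity. }
  rewrite E1.
  apply Rle_trans with (lsum L1 (fun x => Fl (phi x))); [apply lsum_le; apply Apair_le|].
  replace (lsum L1 (fun x => Fl (phi x))) with (lsum L1 (fun x => (fun q => Fl (fst q)) (psi x)))
    by (apply lsum_ext; intros [a b] _; reflexivity).
  eapply Rle_trans.
  { apply (lsum_inj _ _ pair_dec L1 L2 psi (fun q => Fl (fst q))).
    - unfold L1. apply NoDup_filter. apply NoDup_prod; [apply NoDup_grid|].
      constructor; [simpl; intuition discriminate|constructor; [simpl; tauto|constructor]].
    - apply psi_in.
    - apply psi_inj.
    - intros; apply Fl_nonneg. }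
  unfold L2. rewrite lsum_flat_map. rewrite <- lsum_scal. apply lsum_le. intros w _.
  rewrite lsum_map. cbn [fst]. rewrite lsum_const.
  pose proof (Wz_len w). apply le_INR in H. simpl in H. pose proof (Fl_nonneg w). nra.
Qed.

Lemma final_bound : F'_h D rb sb n u <= 17 * F_h D rb sb n u.
Proof.
  unfold F'_h, F_h. rewrite !energy_eq.
  change (lsum (grid n) F'l <= 17 * lsum (grid n) Fl).
  apply Rle_trans with (lsum (grid n) (fun p => 5 * Fl p + 2 * Aof p)).
  { apply lsum_le. intros; apply pointwise. }
  rewrite lsum_plus, !lsum_scal. pose proof sumA_le. lra.
Qed.
End Final.


Theorem mainTheorem19
  (D : field)
  (HDspd : forall x y, spd (D x y))
  (HDcont : field_continuous D)
  (HDper : field_periodic D)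
  (rb : R -> R -> zv * zv)
  (Hrb : forall x y, reduced_basis (Mof D x y) (rb x y))
  (sb : R -> R -> zv * zv * zv)
  (Hsb : forall x y, obtuse_superbase (Mof D x y) (sb x y))
  (n : nat) (Hn : (1 <= n)%nat)
  (Htau : tau_h D (/ INR n) <= Rpower (1 + / (3 * kappaB D ^ 2)) (/ 4))
  (Htheta : theta_h D (/ INR n) <= / (4 * kappaB D))
  (u : Z -> Z -> R) :
  F'_h D rb sb n u <= 17 * F_h D rb sb n u.
Proof.
  exact (final_bound D HDspd HDcont HDper rb Hrb sb Hsb n Hn Htau u).
Qed.

Print Assumptions mainTheorem19.
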